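(* The peer subcontract preorder $\sqsubseteq$ equals $\nu X.\mathcal S(X,X)$, the greatest fixed point of the map $X\mapsto\mathcal S(X,X)$ on the powerset of $\mathcal{SC}\times\mathcal{SC}$.
   Context: Fix base types $BT$ with preorder $\leq_{\mathsf b}$ and labels $\mathcal L$. Contract terms: $\sigma::=\mathbf 1\mid ?\mathtt t.\sigma\mid !\mathtt t.\sigma\mid !(\sigma).\sigma\mid ?(\sigma).\sigma\mid \sum_{i\in I}?l_i.\sigma_i\mid \bigoplus_{i\in I}!l_i.\sigma_i\mid \mu x.\sigma\mid x$ ($I$ finite nonempty, labels distinct). $\mathcal{SC}$ = closed guarded terms. $\mathrm{unfold}(\mu x.\sigma')=\mathrm{unfold}(\sigma'[\mu x.\sigma'/x])$, otherwise identity. LTS: $\mathbf 1\xrightarrow\checkmark$; $\lambda.\sigma\xrightarrow\lambda\sigma$ for prefixes (including $!l.\sigma$); $\bigoplus_{i\in I}!l_i.\sigma_i\xrightarrow\tau!l_i.\sigma_i$ for $|I|>1$; $\sum ?l_i.\sigma_i\xrightarrow{?l_i}\sigma_i$; $\mu x.\sigma\xrightarrow\tau\sigma[\mu x.\sigma/x]$. $\lambda_1\bowtie_B\lambda_2$ iff the pair is $(!l,?l)$, $(?l,!l)$, $(!\mathtt t_1,?\mathtt t_2)$ with $\mathtt t_1\leq_{\mathsf b}\mathtt t_2$, $(?\mathtt t_1,!\mathtt t_2)$ with $\mathtt t_2\leq_{\mathsf b}\mathtt t_1$, $(!(\sigma_1),?(\sigma_2))$ with $\sigma_1B\sigma_2$,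 $(?(\sigma_1),!(\sigma_2))$ with $\sigma_2B\sigma_1$. $\rho\|\sigma\xrightarrow\tau_B$ by a $\tau$ of either side or by synchronisation on $\lambda_1\bowtie_B\lambda_2$. $\dashv_B$: greatest $R$ with $\rho R\sigma$ implying (i) if $\rho\|\sigma$ has no $\xrightarrow\tau_B$ move then $\rho\xrightarrow\checkmark$, $\sigma\xrightarrow\checkmark$; (ii) every $\rho\|\sigma\xrightarrow\tau_B\rho'\|\sigma'$ has $\rho'R\sigma'$. $\sigma_1\sqsubseteq_B\sigma_2$ iff $\forall\rho$, $\rho\dashv_B\sigma_1\Rightarrow\rho\dashv_B\sigma_2$. $\sqsubseteq$ is the greatest fixed point of the monotone map $B\mapsto\sqsubseteq_B$ on preorders over $\mathcal{SC}$. For $R,B\subseteq\mathcal{SC}^2$, $\mathcal S(R,B)$ is the set of $(\sigma_1,\sigma_2)$ such that, depending on $\mathrm{unfold}(\sigma_1)$: $\mathbf 1$ forces $\mathrm{unfold}(\sigma_2)=\mathbf 1$; $?\mathtt t_1.\sigma_1'$ forces $\mathrm{unfold}(\sigma_2)=?\mathtt t_2.\sigma_2'$ with $\sigma_1'R\sigma_2'$, $\mathtt t_1\leq_{\mathsf b}\mathtt t_2$; $!\mathtt t_1.\sigma_1'$ forces $!\mathtt t_2.\sigma_2'$ with $\sigma_1'R\sigma_2'$, $\mathtt t_2\leq_{\mathsf b}\mathtt t_1$; $!(\sigma^m_1).\sigma_1'$ forces $!(\sigma^m_2).\sigma_2'$ with $\sigma_1'R\sigma_2'$, $\sigma^m_2B\sigma^m_1$;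 $?(\sigma^m_1).\sigma_1'$ forces $?(\sigma^m_2).\sigma_2'$ with $\sigma_1'R\sigma_2'$, $\sigma^m_1B\sigma^m_2$; $\sum_{i\in I}?l_i.\sigma^1_i$ forces $\sum_{j\in J}?l_j.\sigma^2_j$ with $I\subseteq J$, $\sigma^1_iR\sigma^2_i$; $\bigoplus_{i\in I}!l_i.\sigma^1_i$ forces $\bigoplus_{j\in J}!l_j.\sigma^2_j$ with $J\subseteq I$, $\sigma^1_jR\sigma^2_j$. *)

(* Defs.v *)
From Stdlib Require Import List Classes.RelationClasses.
Import ListNotations.

Section Contracts.
Variables (BT L : Type).

(* OutS m s = !(m).s ,  InS m s = ?(m).s ;
   Ext bs = sum_{i} ?l_i.s_i ,  Int bs = (+)_{i} !l_i.s_i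
   (a singleton Int [(l,s)] is the prefix !l.s). *)
Inductive term : Type :=
| One : term
| InT : BT -> term -> term
| OutT : BT -> term -> term
| OutS : term -> term -> term
| InS : term -> term -> term
| Ext : list (L * term) -> term
| Int : list (L * term) -> term
| Mu : nat -> term -> term
| Var : nat -> term.

(* capture-free substitution s[r/x] (r will always be closed) *)
Fixpoint subst (s : term) (x : nat) (r : term) : term :=
  match s with
  | One => One
  | InT t s' => InT t (subst s' x r)
  | OutT t s' => OutT t (subst s' x r)
  | OutS m s' => OutS (subst m x r) (subst s' x r)
  | InS m s' => InS (subst m x r) (subst s' x r)
  | Ext bs => Ext ((fix go bs := match bs with
                               | [] => []
                               | (l, t) :: bs' => (l, subst t x r) :: go bs'
                               end) bs)
  | Int bs => Int ((fix go bs := match bs with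
                               | [] => []
                               | (l, t) :: bs' => (l, subst t x r) :: go bs'
                               end) bs)
  | Mu y s' => if Nat.eqb x y then Mu y s' else Mu y (subst s' x r)
  | Var y => if Nat.eqb x y then r else Var y
  end.

Fixpoint free_in (x : nat) (s : term) : Prop :=
  match s with
  | One => False
  | InT _ s' | OutT _ s' => free_in x s'
  | OutS m s' | InS m s' => free_in x m \/ free_in x s'
  | Ext bs | Int bs => (fix go bs := match bs with
                                     | [] => False
                                     | (_, t) :: bs' => free_in x t \/ go bs'
                                     end) bs
  | Mu y s' => x <> y /\ free_in x s'
  | Var y => x = y
  end.

Definition closed (s : term) : Prop := forall x, ~ free_in x s.

Fixpoint unguarded (x : nat) (s : term) : Prop :=
  match s with
  | Var y => x = y
  | Mu y s' => x <> y /\ unguarded x s'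
  | _ => False
  end.

Fixpoint guarded (s : term) : Prop :=
  match s with
  | One | Var _ => True
  | InT _ s' | OutT _ s' => guarded s'
  | OutS m s' | InS m s' => guarded m /\ guarded s'
  | Ext bs | Int bs => (fix go bs := match bs with
                                     | [] => True
                                     | (_, t) :: bs' => guarded t /\ go bs'
                                     end) bs
  | Mu x s' => ~ unguarded x s' /\ guarded s'
  end.

Fixpoint wf (s : term) : Prop :=
  match s with
  | One | Var _ => True
  | InT _ s' | OutT _ s' => wf s'
  | OutS m s' | InS m s' => wf m /\ wf s'
  | Ext bs | Int bs => bs <> [] /\ NoDup (map fst bs) /\
      (fix go bs := match bs with
                    | [] => True
                    | (_, t) :: bs' => wf t /\ go bs'
                    end) bs
  | Mu _ s' => wf s'
  end.

Definition SC (s : term) : Prop := closed s /\ guarded s /\ wf s.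

Inductive unfolds : term -> term -> Prop :=
| unf_mu : forall x s u, unfolds (subst s x (Mu x s)) u -> unfolds (Mu x s) u
| unf_other : forall s, (forall x s', s <> Mu x s') -> unfolds s s.

Inductive action : Type :=
| ATick | ATau
| AInT : BT -> action | AOutT : BT -> action
| AOutS : term -> action | AInS : term -> action
| AInL : L -> action | AOutL : L -> action.

(* LTS; the target of the tick transition is irrelevant (taken to be 1) *)
Inductive step : term -> action -> term -> Prop :=
| st_tick : step One ATick One
| st_inT : forall t s, step (InT t s) (AInT t) s
| st_outT : forall t s, step (OutT t s) (AOutT t) s
| st_outS : forall m s, step (OutS m s) (AOutS m) s
| st_inS : forall m s, step (InS m s) (AInS m) s
| st_outL : forall l s, step (Int [(l, s)]) (AOutL l) s
| st_int : forall bs l s, 1 < length bs -> In (l, s) bs ->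
    step (Int bs) ATau (Int [(l, s)])
| st_ext : forall bs l s, In (l, s) bs -> step (Ext bs) (AInL l) s
| st_mu : forall x s, step (Mu x s) ATau (subst s x (Mu x s)).

Variable leb : BT -> BT -> Prop.

Definition dual (B : term -> term -> Prop) (a1 a2 : action) : Prop :=
  match a1, a2 with
  | AOutL l1, AInL l2 => l1 = l2
  | AInL l1, AOutL l2 => l1 = l2
  | AOutT t1, AInT t2 => leb t1 t2
  | AInT t1, AOutT t2 => leb t2 t1
  | AOutS s1, AInS s2 => B s1 s2
  | AInS s1, AOutS s2 => B s2 s1
  | _, _ => False
  end.

Inductive par_tau (B : term -> term -> Prop) :
    term -> term -> term -> term -> Prop :=
| pt_left : forall r r' s, step r ATau r' -> par_tau B r s r' s
| pt_right : forall r s s', step s ATau s' -> par_tau B r s r s'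
| pt_sync : forall r r' s s' a1 a2,
    step r a1 r' -> step s a2 s' -> dual B a1 a2 -> par_tau B r s r' s'.

Definition compliance_post (B R : term -> term -> Prop) : Prop :=
  forall r s, R r s ->
    ((forall r' s', ~ par_tau B r s r' s') ->
        (exists r', step r ATick r') /\ (exists s', step s ATick s')) /\
    (forall r' s', par_tau B r s r' s' -> R r' s').

Definition complies (B : term -> term -> Prop) (r s : term) : Prop :=
  exists R, compliance_post B R /\ R r s.

Definition subB (B : term -> term -> Prop) (s1 s2 : term) : Prop :=
  SC s1 /\ SC s2 /\
  forall r, SC r -> complies B r s1 -> complies B r s2.

Definition preorder_on_SC (B : term -> term -> Prop) : Prop :=
  (forall x y, B x y -> SC x /\ SC y) /\
  (forall x, SC x -> B x x) /\
  (forall x y z, B x y -> B y z -> B x z).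

(* peer subcontract: greatest fixed point of B |-> [=_B on preorders over SC,
   i.e. (Knaster-Tarski) the union of all post-fixed preorders *)
Definition peer_sub (s1 s2 : term) : Prop :=
  exists B, preorder_on_SC B /\ (forall x y, B x y -> subB B x y) /\ B s1 s2.

Definition Sfun (R B : term -> term -> Prop) (s1 s2 : term) : Prop :=
  forall u1, unfolds s1 u1 ->
  match u1 with
  | One => unfolds s2 One
  | InT t1 s1' => exists t2 s2', unfolds s2 (InT t2 s2') /\ R s1' s2' /\ leb t1 t2
  | OutT t1 s1' => exists t2 s2', unfolds s2 (OutT t2 s2') /\ R s1' s2' /\ leb t2 t1
  | OutS m1 s1' => exists m2 s2', unfolds s2 (OutS m2 s2') /\ R s1' s2' /\ B m2 m1
  | InS m1 s1' => exists m2 s2', unfolds s2 (InS m2 s2') /\ R s1' s2' /\ B m1 m2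
  | Ext bs1 => exists bs2, unfolds s2 (Ext bs2) /\
      forall l s1', In (l, s1') bs1 -> exists s2', In (l, s2') bs2 /\ R s1' s2'
  | Int bs1 => exists bs2, unfolds s2 (Int bs2) /\
      forall l s2', In (l, s2') bs2 -> exists s1', In (l, s1') bs1 /\ R s1' s2'
  | Mu _ _ | Var _ => False
  end.

(* nu X. S(X,X) on the powerset of SC x SC: union of all post-fixed X *)
Definition nuS (s1 s2 : term) : Prop :=
  exists X : term -> term -> Prop,
    (forall x y, X x y -> SC x /\ SC y /\ Sfun X X x y) /\ X s1 s2.

End Contracts.

Arguments One {BT L}.
Arguments InT {BT L}.
Arguments OutT {BT L}.
Arguments OutS {BT L}.
Arguments InS {BT L}.
Arguments Ext {BT L}.
Arguments Int {BT L}.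
Arguments Mu {BT L}.
Arguments Var {BT L}.
Arguments peer_sub {BT L} leb s1 s2.
Arguments nuS {BT L} leb s1 s2.

(* Main.v *)
Require Import Defs.
From Stdlib Require Import List Classes.RelationClasses Classical Lia PeanoNat.
Import ListNotations.

Section Proof.
Variables (BT L : Type) (leb : BT -> BT -> Prop).
Local Notation term := (term BT L).
Local Notation action := (action BT L).
Local Notation subst := (@subst BT L).
Local Notation free_in := (@free_in BT L).
Local Notation closed := (@closed BT L).
Local Notation unguarded := (@unguarded BT L).
Local Notation guarded := (@guarded BT L).
Local Notation wf := (@wf BT L).
Local Notation SC := (@SC BT L).
Local Notation unfolds := (@unfolds BT L).
Local Notation step := (@step BT L).
Local Notation ATick := (@ATick BT L).
Local Notation ATau := (@ATau BT L).
Local Notation AInT := (@AInT BT L).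
Local Notation AOutT := (@AOutT BT L).
Local Notation AInS := (@AInS BT L).
Local Notation AOutS := (@AOutS BT L).
Local Notation AInL := (@AInL BT L).
Local Notation AOutL := (@AOutL BT L).

Section Ind.
Variable P : term -> Prop.
Hypotheses
  (H1 : P One)
  (H2 : forall t s, P s -> P (InT t s))
  (H3 : forall t s, P s -> P (OutT t s))
  (H4 : forall m s, P m -> P s -> P (OutS m s))
  (H5 : forall m s, P m -> P s -> P (InS m s))
  (H6 : forall bs, (forall l t, In (l, t) bs -> P t) -> P (Ext bs))
  (H7 : forall bs, (forall l t, In (l, t) bs -> P t) -> P (Int bs))
  (H8 : forall x s, P s -> P (Mu x s))
  (H9 : forall x, P (Var x)).
Fixpoint tind (s : term) : P s :=
  match s with
  | One => H1
  | InT t s => H2 t s (tind s)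
  | OutT t s => H3 t s (tind s)
  | OutS m s => H4 m s (tind m) (tind s)
  | InS m s => H5 m s (tind m) (tind s)
  | Ext bs => H6 bs ((fix go (bs : list (L * term)) : forall l t, In (l,t) bs -> P t :=
       match bs with
       | [] => fun l t H => False_ind _ H
       | (l0, t0) :: bs' => let p := tind t0 in let r := go bs' in
           fun l t H => match H with
             | or_introl E => eq_ind (l0,t0) (fun q => P (snd q)) p (l,t) E
             | or_intror H' => r l t H' end
       end) bs)
  | Int bs => H7 bs ((fix go (bs : list (L * term)) : forall l t, In (l,t) bs -> P t :=
       match bs with
       | [] => fun l t H => False_ind _ H
       | (l0, t0) :: bs' => let p := tind t0 in let r := go bs' in
           fun l t H => match H with
             | or_introl E => eq_ind (l0,t0) (fun q => P (snd q)) p (l,t) E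
             | or_intror H' => r l t H' end
       end) bs)
  | Mu x s => H8 x s (tind s)
  | Var x => H9 x
  end.
End Ind.

Definition mapb (f : term -> term) (bs : list (L * term)) :=
  map (fun p => (fst p, f (snd p))) bs.

Lemma subst_Ext bs x r : subst (Ext bs) x r = Ext (mapb (fun t => subst t x r) bs).
Proof. simpl. f_equal. induction bs as [|[l t] bs IH]; simpl; congruence. Qed.
Lemma subst_Int bs x r : subst (Int bs) x r = Int (mapb (fun t => subst t x r) bs).
Proof. simpl. f_equal. induction bs as [|[l t] bs IH]; simpl; congruence. Qed.

Lemma free_Ext x bs : free_in x (Ext bs) <-> exists l t, In (l,t) bs /\ free_in x t.
Proof.
  simpl. induction bs as [|[l t] bs IH]; simpl.
  - firstorder.
  - rewrite IH. split.
    + intros [H|(l1&t1&H&H')]; [exists l, t; auto|exists l1, t1; auto].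
    + intros (l1&t1&[E|H]&H'); [inversion E; subst; auto|]. right; eauto.
Qed.
Lemma free_Int x bs : free_in x (Int bs) <-> exists l t, In (l,t) bs /\ free_in x t.
Proof.
  simpl. induction bs as [|[l t] bs IH]; simpl.
  - firstorder.
  - rewrite IH. split.
    + intros [H|(l1&t1&H&H')]; [exists l, t; auto|exists l1, t1; auto].
    + intros (l1&t1&[E|H]&H'); [inversion E; subst; auto|]. right; eauto.
Qed.

Lemma guarded_Ext bs : guarded (Ext bs) <-> forall l t, In (l,t) bs -> guarded t.
Proof.
  simpl. induction bs as [|[l t] bs IH]; simpl.
  - split; [tauto|auto].
  - rewrite IH. split.
    + intros [H H'] l1 t1 [E|Hin]; [inversion E; subst; auto|eauto].
    + intros H; split; eauto.
Qed.
Lemma guarded_Int bs : guarded (Int bs) <-> forall l t, In (l,t) bs -> guarded t.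
Proof.
  simpl. induction bs as [|[l t] bs IH]; simpl.
  - split; [tauto|auto].
  - rewrite IH. split.
    + intros [H H'] l1 t1 [E|Hin]; [inversion E; subst; auto|eauto].
    + intros H; split; eauto.
Qed.

Lemma wf_list bs : (fix go (bs : list (L * term)) := match bs with
                    | [] => True
                    | (_, t) :: bs' => wf t /\ go bs'
                    end) bs <-> forall l t, In (l,t) bs -> wf t.
Proof.
  induction bs as [|[l t] bs IH]; simpl.
  - split; [tauto|auto].
  - rewrite IH. split.
    + intros [H H'] l1 t1 [E|Hin]; [inversion E; subst; auto|eauto].
    + intros H; split; eauto.
Qed.
Lemma wf_Ext bs : wf (Ext bs) <-> bs <> [] /\ NoDup (map fst bs) /\ forall l t, In (l,t) bs -> wf t.
Proof. simpl. rewrite wf_list. tauto. Qed.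
Lemma wf_Int bs : wf (Int bs) <-> bs <> [] /\ NoDup (map fst bs) /\ forall l t, In (l,t) bs -> wf t.
Proof. simpl. rewrite wf_list. tauto. Qed.

Lemma in_mapb f bs l t : In (l,t) (mapb f bs) <-> exists t0, In (l,t0) bs /\ t = f t0.
Proof.
  unfold mapb. rewrite in_map_iff. split.
  - intros ([l0 t0]&E&H). simpl in E. inversion E; subst. eauto.
  - intros (t0&H&->). exists (l,t0); auto.
Qed.
Lemma fst_mapb f bs : map fst (mapb f bs) = map fst bs.
Proof. unfold mapb. rewrite map_map. reflexivity. Qed.
Lemma mapb_nil f bs : mapb f bs <> [] <-> bs <> [].
Proof. destruct bs; simpl; split; congruence. Qed.

Lemma nodup_fun (bs : list (L * term)) l a b :
  NoDup (map fst bs) -> In (l,a) bs -> In (l,b) bs -> a = b.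
Proof.
  induction bs as [|[l0 t0] bs IH]; simpl; [tauto|].
  intros ND Ha Hb. inversion ND as [|? ? Hn ND']; subst.
  destruct Ha as [Ea|Ha], Hb as [Eb|Hb].
  - inversion Ea; inversion Eb; subst; auto.
  - inversion Ea; subst. exfalso; apply Hn. apply in_map_iff. exists (l,b); auto.
  - inversion Eb; subst. exfalso; apply Hn. apply in_map_iff. exists (l,a); auto.
  - eauto.
Qed.


Definition upd (e : nat -> term) (x : nat) (v : term) : nat -> term :=
  fun y => if Nat.eqb x y then v else e y.

Fixpoint psub (e : nat -> term) (s : term) : term :=
  match s with
  | One => One
  | InT t s => InT t (psub e s)
  | OutT t s => OutT t (psub e s)
  | OutS m s => OutS (psub e m) (psub e s)
  | InS m s => InS (psub e m) (psub e s)
  | Ext bs => Ext (map (fun p => (fst p, psub e (snd p))) bs)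
  | Int bs => Int (map (fun p => (fst p, psub e (snd p))) bs)
  | Mu y s => Mu y (psub (upd e y (Var y)) s)
  | Var y => e y
  end.

Lemma upd_eq e x v : upd e x v x = v.
Proof. unfold upd. rewrite Nat.eqb_refl. auto. Qed.
Lemma upd_neq e x v y : x <> y -> upd e x v y = e y.
Proof. unfold upd. intros H. apply Nat.eqb_neq in H. rewrite H. auto. Qed.

Lemma mapb_ext f g bs : (forall l t, In (l,t) bs -> f t = g t) -> mapb f bs = mapb g bs.
Proof.
  induction bs as [|[l t] bs IH]; simpl; intros H; auto.
  unfold mapb in *; simpl. rewrite (H l t) by auto. f_equal. apply IH. intros; eapply H; eauto.
Qed.
Lemma mapb_id bs : mapb (fun t => t) bs = bs.
Proof. induction bs as [|[l t] bs IH]; simpl; auto. unfold mapb in *; simpl; congruence. Qed.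

Lemma unguarded_free x s : unguarded x s -> free_in x s.
Proof. revert x. induction s using tind; simpl; intros; try tauto. firstorder. Qed.

Lemma psub_ext s : forall e e', (forall x, free_in x s -> e x = e' x) -> psub e s = psub e' s.
Proof.
  induction s using tind; intros e e' HE; simpl in *.
  - reflexivity.
  - f_equal. apply IHs; intros; apply HE; auto.
  - f_equal. apply IHs; intros; apply HE; auto.
  - f_equal; [apply IHs1|apply IHs2]; intros; apply HE; auto.
  - f_equal; [apply IHs1|apply IHs2]; intros; apply HE; auto.
  - f_equal. apply (mapb_ext (psub e) (psub e')). intros l t Hin. apply H with l; auto.
    intros x Hx. apply HE. apply free_Ext. eauto.
  - f_equal. apply (mapb_ext (psub e) (psub e')). intros l t Hin. apply H with l; auto.
    intros x Hx. apply HE. apply free_Int. eauto.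
  - f_equal. apply IHs. intros y Hy. unfold upd. destruct (Nat.eqb_spec x y); auto.
  - apply HE. auto.
Qed.

Lemma psub_id s : psub (fun x => Var x) s = s.
Proof.
  induction s using tind; simpl; try congruence.
  - f_equal. rewrite <- (mapb_id bs) at 2. apply (mapb_ext (psub _) (fun t => t)). eauto.
  - f_equal. rewrite <- (mapb_id bs) at 2. apply (mapb_ext (psub _) (fun t => t)). eauto.
  - f_equal. rewrite <- IHs at 2. apply psub_ext. intros y _. unfold upd.
    destruct (Nat.eqb_spec x y); subst; auto.
Qed.

Lemma subst_psub s : forall x N, subst s x N = psub (upd (fun z => Var z) x N) s.
Proof.
  induction s using tind; intros y N.
  - reflexivity.
  - simpl. f_equal; auto.
  - simpl. f_equal; auto.
  - simpl. f_equal; auto.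
  - simpl. f_equal; auto.
  - rewrite subst_Ext. cbn [psub]. f_equal. apply (mapb_ext _ (psub _)). eauto.
  - rewrite subst_Int. cbn [psub]. f_equal. apply (mapb_ext _ (psub _)). eauto.
  - simpl. destruct (Nat.eqb_spec y x).
    + subst. f_equal. rewrite <- (psub_id s) at 1. apply psub_ext. intros z _.
      unfold upd. destruct (Nat.eqb_spec x z); auto.
    + f_equal. rewrite IHs. apply psub_ext. intros z _. unfold upd.
      destruct (Nat.eqb_spec x z); destruct (Nat.eqb_spec y z); subst; auto; congruence.
  - simpl. unfold upd. destruct (Nat.eqb_spec y x); auto.
Qed.

Lemma psub_free s : forall e z, free_in z (psub e s) -> exists w, free_in w s /\ free_in z (e w).
Proof.
  induction s using tind; intros e z Hz; simpl in *.
  - tauto.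
  - destruct (IHs e z Hz) as (w&?&?); eauto.
  - destruct (IHs e z Hz) as (w&?&?); eauto.
  - destruct Hz as [Hz|Hz]; [destruct (IHs1 e z Hz) as (w&?&?)|destruct (IHs2 e z Hz) as (w&?&?)]; eauto.
  - destruct Hz as [Hz|Hz]; [destruct (IHs1 e z Hz) as (w&?&?)|destruct (IHs2 e z Hz) as (w&?&?)]; eauto.
  - change (free_in z (Ext (mapb (psub e) bs))) in Hz. apply free_Ext in Hz.
    destruct Hz as (l&t&Hin&Hf). apply in_mapb in Hin. destruct Hin as (t0&Hin&->).
    destruct (H l t0 Hin e z Hf) as (w&?&?). exists w; split; auto. apply free_Ext; eauto.
  - change (free_in z (Int (mapb (psub e) bs))) in Hz. apply free_Int in Hz.
    destruct Hz as (l&t&Hin&Hf). apply in_mapb in Hin. destruct Hin as (t0&Hin&->).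
    destruct (H l t0 Hin e z Hf) as (w&?&?). exists w; split; auto. apply free_Int; eauto.
  - destruct Hz as [Hne Hz]. destruct (IHs _ _ Hz) as (w&Hw&Hz').
    unfold upd in Hz'. destruct (Nat.eqb_spec x w).
    + subst. simpl in Hz'. congruence.
    + exists w. split; auto.
  - exists x. auto.
Qed.

Lemma psub_unguarded s : forall e z, unguarded z (psub e s) -> exists w, unguarded w s /\ unguarded z (e w).
Proof.
  induction s using tind; intros e z Hz; simpl in *; try tauto.
  - destruct Hz as [Hne Hz]. destruct (IHs _ _ Hz) as (w&Hw&Hz').
    unfold upd in Hz'. destruct (Nat.eqb_spec x w).
    + subst. simpl in Hz'. congruence.
    + exists w. split; auto.
  - exists x. auto.
Qed.

Lemma psub_guarded s : forall e, guarded s ->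
  (forall w, free_in w s -> guarded (e w) /\ (e w = Var w \/ closed (e w))) -> guarded (psub e s).
Proof.
  induction s using tind; intros e Hg He; simpl in *; auto.
  - destruct Hg; split; [apply IHs1|apply IHs2]; auto; intros; apply He; auto.
  - destruct Hg; split; [apply IHs1|apply IHs2]; auto; intros; apply He; auto.
  - change (guarded (Ext (mapb (psub e) bs))). apply guarded_Ext. intros l t Hin.
    apply in_mapb in Hin. destruct Hin as (t0&Hin&->). change (guarded (Ext bs)) in Hg; rewrite guarded_Ext in Hg.
    apply H with l; eauto. intros w Hw. apply He. apply free_Ext; eauto.
  - change (guarded (Int (mapb (psub e) bs))). apply guarded_Int. intros l t Hin.
    apply in_mapb in Hin. destruct Hin as (t0&Hin&->). change (guarded (Int bs)) in Hg; rewrite guarded_Int in Hg.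
    apply H with l; eauto. intros w Hw. apply He. apply free_Int; eauto.
  - destruct Hg as [Hng Hg]. split.
    + intros Hu. destruct (psub_unguarded _ _ _ Hu) as (w&Hw&Hz).
      unfold upd in Hz. destruct (Nat.eqb_spec x w).
      * subst. auto.
      * destruct (He w) as [_ [E|C]].
        -- split; auto. apply unguarded_free; auto.
        -- rewrite E in Hz. simpl in Hz. congruence.
        -- apply (C x). apply unguarded_free; auto.
    + apply IHs; auto. intros w Hw. unfold upd. destruct (Nat.eqb_spec x w).
      * subst. simpl. auto.
      * apply He. auto.
  - destruct (He x eq_refl); auto.
Qed.

Lemma psub_wf s : forall e, wf s -> (forall w, free_in w s -> wf (e w)) -> wf (psub e s).
Proof.
  induction s using tind; intros e Hg He; simpl in *; auto.
  - destruct Hg; split; [apply IHs1|apply IHs2]; auto; intros; apply He; auto.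
  - destruct Hg; split; [apply IHs1|apply IHs2]; auto; intros; apply He; auto.
  - change (wf (Ext (mapb (psub e) bs))). apply wf_Ext. change (wf (Ext bs)) in Hg; apply wf_Ext in Hg.
    destruct Hg as (Hn&Hd&Hw). rewrite fst_mapb, mapb_nil. repeat split; auto.
    intros l t Hin. apply in_mapb in Hin. destruct Hin as (t0&Hin&->).
    apply H with l; eauto. intros w Hw'. apply He. apply free_Ext; eauto.
  - change (wf (Int (mapb (psub e) bs))). apply wf_Int. change (wf (Int bs)) in Hg; apply wf_Int in Hg.
    destruct Hg as (Hn&Hd&Hw). rewrite fst_mapb, mapb_nil. repeat split; auto.
    intros l t Hin. apply in_mapb in Hin. destruct Hin as (t0&Hin&->).
    apply H with l; eauto. intros w Hw'. apply He. apply free_Int; eauto.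
  - apply IHs; auto. intros w Hw. unfold upd. destruct (Nat.eqb_spec x w).
    + simpl; auto.
    + apply He. auto.
Qed.

Lemma psub_closed s e : closed s -> psub e s = s.
Proof.
  intros C. rewrite <- (psub_id s) at 2. apply psub_ext. intros x Hx. exfalso; eapply C; eauto.
Qed.

Lemma subst_closed s x N : closed s -> subst s x N = s.
Proof. intros C. rewrite subst_psub. apply psub_closed; auto. Qed.

Lemma E1 t : forall e y N, (forall w, free_in w t -> w <> y -> subst (e w) y N = e w) ->
  subst (psub (upd e y (Var y)) t) y N = psub (upd e y N) t.
Proof.
  induction t using tind; intros e y N HE.
  - reflexivity.
  - simpl in *. f_equal. auto.
  - simpl in *. f_equal. auto.
  - simpl in *. f_equal; [apply IHt1|apply IHt2]; auto.
  - simpl in *. f_equal; [apply IHt1|apply IHt2]; auto.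
  - change (subst (Ext (mapb (psub (upd e y (Var y))) bs)) y N = Ext (mapb (psub (upd e y N)) bs)).
    rewrite subst_Ext. f_equal. unfold mapb. rewrite map_map. simpl.
    apply map_ext_in. intros [l t] Hin. simpl. f_equal. apply H with l; auto.
    intros w Hw. apply HE. apply free_Ext; eauto.
  - change (subst (Int (mapb (psub (upd e y (Var y))) bs)) y N = Int (mapb (psub (upd e y N)) bs)).
    rewrite subst_Int. f_equal. unfold mapb. rewrite map_map. simpl.
    apply map_ext_in. intros [l t] Hin. simpl. f_equal. apply H with l; auto.
    intros w Hw. apply HE. apply free_Int; eauto.
  - simpl. destruct (Nat.eqb_spec y x).
    + subst. f_equal. apply psub_ext. intros z _. unfold upd.
      destruct (Nat.eqb_spec x z); auto.
    + f_equal. rewrite (psub_ext t (upd (upd e y (Var y)) x (Var x)) (upd (upd e x (Var x)) y (Var y))).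
      2:{ intros z _. unfold upd. destruct (Nat.eqb_spec x z); destruct (Nat.eqb_spec y z); subst; auto; congruence. }
      rewrite IHt.
      * apply psub_ext. intros z _. unfold upd. destruct (Nat.eqb_spec x z); destruct (Nat.eqb_spec y z); subst; auto; congruence.
      * intros w Hw Hne. unfold upd. destruct (Nat.eqb_spec x w).
        -- simpl. subst w. destruct (Nat.eqb_spec y x); [congruence|auto].
        -- apply HE; simpl; auto.
  - simpl. unfold upd. destruct (Nat.eqb_spec y x).
    + simpl. subst. rewrite Nat.eqb_refl. auto.
    + apply HE; simpl; auto.
Qed.


Definition notMu (s : term) := forall x s', s <> Mu x s'.

Lemma unfolds_notMu s u : unfolds s u -> notMu u.
Proof. induction 1; auto. Qed.
Lemma unfolds_self s u : notMu s -> unfolds s u -> u = s.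
Proof. intros N H. destruct H; auto. exfalso; eapply N; eauto. Qed.
Lemma unfolds_det s u : unfolds s u -> forall u', unfolds s u' -> u' = u.
Proof.
  induction 1; intros u' H'.
  - inversion H'; subst; auto. exfalso; eapply H0; eauto.
  - apply unfolds_self in H'; auto.
Qed.
Lemma unfolds_Mu_inv x s u : unfolds (Mu x s) u -> unfolds (subst s x (Mu x s)) u.
Proof. intros H; inversion H; subst; auto. exfalso; eapply H0; eauto. Qed.
Lemma unfolds_refl s : notMu s -> unfolds s s.
Proof. intros; constructor; auto. Qed.

Lemma closed_Mu_step x s : closed (Mu x s) -> closed (subst s x (Mu x s)).
Proof.
  intros C z Hz. rewrite subst_psub in Hz. apply psub_free in Hz. destruct Hz as (w&Hw&Hz).
  unfold upd in Hz. destruct (Nat.eqb_spec x w).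
  - eapply C; eauto.
  - simpl in Hz. subst. apply (C w). simpl; auto.
Qed.

Lemma SC_Mu_step x s : SC (Mu x s) -> SC (subst s x (Mu x s)).
Proof.
  intros (C&G&W). split; [apply closed_Mu_step; auto|]. rewrite subst_psub. split.
  - apply psub_guarded. { destruct G; auto. }
    intros w Hw. unfold upd. destruct (Nat.eqb_spec x w).
    + split; auto.
    + simpl; auto.
  - apply psub_wf; auto. intros w Hw. unfold upd. destruct (Nat.eqb_spec x w); simpl; auto.
Qed.

Lemma SC_unfolds s u : unfolds s u -> SC s -> SC u.
Proof. induction 1; intros; auto. apply IHunfolds. apply SC_Mu_step; auto. Qed.

Lemma closed_unfolds s u : unfolds s u -> closed s -> closed u.
Proof. induction 1; intros; auto. apply IHunfolds. apply closed_Mu_step; auto. Qed.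

Lemma ex_unf t : guarded t -> forall e, (forall w, free_in w t -> closed (e w)) ->
  (forall w, unguarded w t -> exists u, unfolds (e w) u) -> exists u, unfolds (psub e t) u.
Proof.
  induction t using tind; intros G e HC HU.
  8:{ simpl in G. destruct G as [Gn G].
      set (S := psub e (Mu x t)).
      assert (CS : closed S).
      { intros z Hz. apply psub_free in Hz. destruct Hz as (w&Hw&Hz). eapply HC; eauto. }
      destruct (IHt G (upd e x S)) as (u&Hu).
      - intros w Hw. unfold upd. destruct (Nat.eqb_spec x w); auto. apply HC. simpl; auto.
      - intros w Hw. unfold upd. destruct (Nat.eqb_spec x w).
        + subst. contradiction.
        + apply HU. simpl; auto.
      - exists u. simpl. constructor. fold (psub e (Mu x t)). fold S.
        rewrite E1; auto. intros w Hw Hne. apply subst_closed. apply HC. simpl; auto. }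
  8:{ simpl. apply HU. simpl; auto. }
  all: eexists; constructor; intros y s' E; discriminate.
Qed.

Lemma SC_ex_unf s : SC s -> exists u, unfolds s u.
Proof.
  intros (C&G&W). rewrite <- (psub_id s). apply ex_unf; auto.
  - intros w Hw. exfalso; eapply C; eauto.
  - intros w Hw. exfalso; eapply C; apply unguarded_free; eauto.
Qed.

Lemma SC_InT t s : SC (InT t s) -> SC s.
Proof. intros (C&G&W); repeat split; auto; try (intros x Hx; eapply C; simpl; eauto). Qed.
Lemma SC_OutT t s : SC (OutT t s) -> SC s.
Proof. intros (C&G&W); repeat split; auto; try (intros x Hx; eapply C; simpl; eauto). Qed.
Lemma SC_OutS m s : SC (OutS m s) -> SC m /\ SC s.
Proof. intros (C&[G1 G2]&[W1 W2]); repeat split; auto; try (intros x Hx; eapply C; simpl; eauto). Qed.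
Lemma SC_InS m s : SC (InS m s) -> SC m /\ SC s.
Proof. intros (C&[G1 G2]&[W1 W2]); repeat split; auto; try (intros x Hx; eapply C; simpl; eauto). Qed.
Lemma SC_Ext bs l t : SC (Ext bs) -> In (l,t) bs -> SC t.
Proof.
  intros (C&G&W) Hin. rewrite guarded_Ext in G. rewrite wf_Ext in W. repeat split; eauto.
  - intros x Hx; eapply C. apply free_Ext; eauto.
  - apply W in Hin; auto.
Qed.
Lemma SC_Int bs l t : SC (Int bs) -> In (l,t) bs -> SC t.
Proof.
  intros (C&G&W) Hin. rewrite guarded_Int in G. rewrite wf_Int in W. repeat split; eauto.
  - intros x Hx; eapply C. apply free_Int; eauto.
  - apply W in Hin; auto.
Qed.
Lemma SC_Ext_wf bs : SC (Ext bs) -> bs <> [] /\ NoDup (map fst bs).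
Proof. intros (C&G&W). rewrite wf_Ext in W. tauto. Qed.
Lemma SC_Int_wf bs : SC (Int bs) -> bs <> [] /\ NoDup (map fst bs).
Proof. intros (C&G&W). rewrite wf_Int in W. tauto. Qed.
Lemma SC_Int1 bs l t : SC (Int bs) -> In (l,t) bs -> SC (Int [(l,t)]).
Proof.
  intros H Hin. pose proof (SC_Int _ _ _ H Hin) as (C&G&W). split; [|split].
  - intros x Hx. apply free_Int in Hx. destruct Hx as (?&?&[E|[]]&Hx). inversion E; subst. eapply C; eauto.
  - simpl. auto.
  - simpl. split; [congruence|]. split; auto. constructor; [simpl; tauto|constructor].
Qed.
Lemma SC_Var x : ~ SC (Var x).
Proof. intros (C&_). apply (C x). simpl; auto. Qed.


Local Notation par_tau := (@par_tau BT L leb).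
Local Notation complies := (@complies BT L leb).
Local Notation compliance_post := (@compliance_post BT L leb).
Local Notation dual := (@dual BT L leb).

Lemma step_tick s a s' : step s a s' -> a = ATick -> s = One.
Proof. intros H E. destruct H; try discriminate; auto. Qed.
Lemma step_Mu x s a s' : step (Mu x s) a s' -> a = ATau /\ s' = subst s x (Mu x s).
Proof. intros H; inversion H; subst; auto. Qed.
Lemma step_InT t s a s' : step (InT t s) a s' -> a = AInT t /\ s' = s.
Proof. intros H; inversion H; subst; auto. Qed.
Lemma step_OutT t s a s' : step (OutT t s) a s' -> a = AOutT t /\ s' = s.
Proof. intros H; inversion H; subst; auto. Qed.
Lemma step_InS t s a s' : step (InS t s) a s' -> a = AInS t /\ s' = s.
Proof. intros H; inversion H; subst; auto. Qed.
Lemma step_OutS t s a s' : step (OutS t s) a s' -> a = AOutS t /\ s' = s.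
Proof. intros H; inversion H; subst; auto. Qed.
Lemma step_One a s' : step One a s' -> a = ATick.
Proof. intros H; inversion H; subst; auto. Qed.
Lemma step_Var x a s' : ~ step (Var x) a s'.
Proof. intros H; inversion H. Qed.
Lemma step_Ext bs a s' : step (Ext bs) a s' -> exists l, a = AInL l /\ In (l, s') bs.
Proof. intros H; inversion H; subst; eauto. Qed.
Lemma step_Int bs a s' : step (Int bs) a s' ->
  (a = ATau /\ 1 < length bs /\ exists l t, In (l,t) bs /\ s' = Int [(l,t)]) \/
  (exists l, bs = [(l, s')] /\ a = AOutL l).
Proof. intros H; inversion H; subst; eauto 10. Qed.

Section Comp.
Variable B : term -> term -> Prop.

Lemma complies_post : compliance_post B (complies B).
Proof.
  intros r s (R&HR&Hrs). destruct (HR r s Hrs) as [H1 H2]. split; auto.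
  intros r' s' Hp. exists R; split; auto.
Qed.
Lemma comp_next r s r' s' : complies B r s -> par_tau B r s r' s' -> complies B r' s'.
Proof. intros H Hp. apply (complies_post r s H); auto. Qed.
Lemma comp_stuck r s : complies B r s -> (forall r' s', ~ par_tau B r s r' s') ->
  (exists r', step r ATick r') /\ (exists s', step s ATick s').
Proof. intros H Hs. apply (complies_post r s H); auto. Qed.
Lemma comp_prog_r r s : complies B r s -> r <> One -> exists r' s', par_tau B r s r' s'.
Proof.
  intros H Hne. apply NNPP. intros Hn. destruct (comp_stuck r s H) as [(r'&Ht) _].
  - intros r' s' Hp. apply Hn; eauto.
  - apply Hne. eapply step_tick; eauto.
Qed.
Lemma comp_prog_s r s : complies B r s -> s <> One -> exists r' s', par_tau B r s r' s'.
Proof.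
  intros H Hne. apply NNPP. intros Hn. destruct (comp_stuck r s H) as [_ (s'&Ht)].
  - intros r' s' Hp. apply Hn; eauto.
  - apply Hne. eapply step_tick; eauto.
Qed.
Lemma comp_back r s : (exists r' s', par_tau B r s r' s') ->
  (forall r' s', par_tau B r s r' s' -> complies B r' s') -> complies B r s.
Proof.
  intros Hex Hall. exists (fun a b => complies B a b \/ (a = r /\ b = s)). split; auto.
  intros a b [H|[-> ->]].
  - destruct (complies_post a b H) as [H1 H2]. split; auto.
  - split.
    + intros Hn. destruct Hex as (r'&s'&Hp). exfalso; eapply Hn; eauto.
    + intros r' s' Hp. left; auto.
Qed.

Lemma comp_unf_fwd s u : unfolds s u -> forall r, complies B r s -> complies B r u.
Proof.
  induction 1; intros r H1; auto. apply IHunfolds. eapply comp_next; eauto.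
  apply pt_right. constructor.
Qed.

Lemma comp_unf_back s u : unfolds s u -> forall r, complies B r u -> complies B r s.
Proof.
  intros Hu r Hc.
  exists (fun a b => complies B a b \/ exists x s0 u, b = Mu x s0 /\ unfolds b u /\ complies B a u).
  split.
  2:{ destruct Hu as [x s0 u Hu|]; [right; exists x, s0, u; split; [reflexivity|split; [constructor; auto|auto]]|left; auto]. }
  clear. intros a b [Hc|(x&s&u&->&Hu&Hc)].
  - destruct (complies_post a b Hc) as [H1 H2]. split; auto.
  - split.
    + intros Hs. exfalso. apply (Hs a (subst s x (Mu x s))). apply pt_right. constructor.
    + intros r' s' Hp. inversion Hp; subst.
      * right. exists x, s, u; repeat split; auto. eapply comp_next; eauto. apply pt_left; auto.
      * apply step_Mu in H. destruct H as [_ ->]. apply unfolds_Mu_inv in Hu.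
        destruct (subst s x (Mu x s)) eqn:E; try (left; apply unfolds_self in Hu;
          [subst; auto| intros ? ? ?; discriminate]).
        right. do 3 eexists; split; [reflexivity|]. split; eauto.
      * apply step_Mu in H0. destruct H0 as [-> _]. destruct a1; simpl in H1; contradiction.
Qed.
End Comp.


Lemma notMu_or (r : term) : notMu r \/ exists x s, r = Mu x s.
Proof. destruct r; try (left; intros ? ? ?; discriminate). right; eauto. Qed.

Section Match.
Variable B : term -> term -> Prop.
Variable Q : term -> term -> Prop.

Definition MatchU (ur us : term) : Prop :=
  match us with
  | One => ur = One
  | InT t s' => exists t' r', ur = OutT t' r' /\ leb t' t /\ Q r' s'
  | OutT t s' => exists t' r', ur = InT t' r' /\ leb t t' /\ Q r' s'
  | OutS m s' => exists m' r', ur = InS m' r' /\ B m m' /\ Q r' s'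
  | InS m s' => exists m' r', ur = OutS m' r' /\ B m' m /\ Q r' s'
  | Ext bs => exists cs, ur = Int cs /\ cs <> [] /\
      forall l r', In (l,r') cs -> (exists s', In (l,s') bs) /\ forall s', In (l,s') bs -> Q r' s'
  | Int bs => exists cs, ur = Ext cs /\ bs <> [] /\
      forall l s', In (l,s') bs -> (exists r', In (l,r') cs) /\ forall r', In (l,r') cs -> Q r' s'
  | _ => False
  end.

Definition Match (r s : term) : Prop :=
  exists ur us, unfolds r ur /\ unfolds s us /\ MatchU ur us.

Hypothesis HQ : forall r s, Q r s -> Match r s.

Lemma match_complies r s : Match r s -> complies B r s.
Proof.
  intros HM0. exists Match. split; auto. clear r s HM0.
  intros r s (ur&us&Hur&Hus&HM). split.
  - intros Hst.
    assert (Nr : notMu r). { intros x s' ->. eapply Hst. apply pt_left. constructor. }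
    assert (Ns : notMu s). { intros x s' ->. eapply Hst. apply pt_right. constructor. }
    apply unfolds_self in Hur; auto. apply unfolds_self in Hus; auto. subst ur us.
    destruct s as [|t0 s|t0 s|m0 s|m0 s|bs|bs|x0 s|x0]; simpl in HM.
    + subst. split; exists One; constructor.
    + destruct HM as (t'&r'&->&Hl&_). exfalso. eapply Hst. eapply pt_sync; [constructor|constructor|simpl; eauto].
    + destruct HM as (t'&r'&->&Hl&_). exfalso. eapply Hst. eapply pt_sync; [constructor|constructor|simpl; eauto].
    + destruct HM as (t'&r'&->&Hl&_). exfalso. eapply Hst. eapply pt_sync; [constructor|constructor|simpl; eauto].
    + destruct HM as (t'&r'&->&Hl&_). exfalso. eapply Hst. eapply pt_sync; [constructor|constructor|simpl; eauto].
    + destruct HM as (cs&->&Hne&Hc). exfalso. destruct cs as [|[l r'] [|c cs']]; [congruence| |].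
      * destruct (Hc l r' (or_introl eq_refl)) as [(s'&Hs') _].
        eapply Hst. eapply pt_sync; [constructor|apply st_ext; eauto|simpl; eauto].
      * eapply Hst. apply pt_left. apply st_int with (l:=l) (s:=r'); simpl; auto. lia.
    + destruct HM as (cs&->&Hne&Hc). exfalso. destruct bs as [|[l s'] [|c cs']]; [congruence| |].
      * destruct (Hc l s' (or_introl eq_refl)) as [(r'&Hr') _].
        eapply Hst. eapply pt_sync; [apply st_ext; eauto|constructor|simpl; eauto].
      * eapply Hst. apply pt_right. apply st_int with (l:=l) (s:=s'); simpl; auto. lia.
    + contradiction.
    + contradiction.
  - intros r' s' Hp. inversion Hp as [r0 r1 s0 Hst|r0 s0 s1 Hst|r0 r1 s0 s1 a1 a2 Hs1 Hs2 Hd]; subst.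
    + destruct (notMu_or r) as [Nr|(x&r0&->)].
      * apply unfolds_self in Hur; auto. subst ur.
        destruct us as [|t0 s|t0 s|m0 s|m0 s|bs|bs|x0 s|x0]; simpl in HM; try contradiction;
          try (destruct HM as (?&?&->&_); apply step_InT in Hst || apply step_OutT in Hst ||
               apply step_InS in Hst || apply step_OutS in Hst; destruct Hst; discriminate).
        -- subst. apply step_One in Hst. discriminate.
        -- destruct HM as (cs&->&Hne&Hc). apply step_Int in Hst.
           destruct Hst as [(_&_&l0&t0&Hin&->)|(l0&_&E)]; [|discriminate].
           exists (Int [(l0,t0)]), (Ext bs). split; [constructor; intros ? ? ?; discriminate|]. split; auto.
           exists [(l0,t0)]. split; auto. split; [congruence|]. intros l1 r1 [E|[]]. inversion E; subst. auto.
        -- destruct HM as (cs&->&Hne&Hc). apply step_Ext in Hst. destruct Hst as (?&E&_); discriminate.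
      * apply step_Mu in Hst. destruct Hst as [_ ->]. exists ur, us. split; auto. apply unfolds_Mu_inv; auto.
    + destruct (notMu_or s) as [Ns|(x&s0&->)].
      * apply unfolds_self in Hus; auto. subst us.
        destruct s as [|t0 s|t0 s|m0 s|m0 s|bs|bs|x0 s|x0]; simpl in HM; try contradiction;
          try (destruct HM as (?&?&->&_); apply step_InT in Hst || apply step_OutT in Hst ||
               apply step_InS in Hst || apply step_OutS in Hst; destruct Hst; discriminate).
        -- apply step_One in Hst. discriminate.
        -- apply step_Ext in Hst. destruct Hst as (?&E&_); discriminate.
        -- destruct HM as (cs&->&Hne&Hc). apply step_Int in Hst.
           destruct Hst as [(_&_&l0&t0&Hin&->)|(l0&_&E)]; [|discriminate].
           exists (Ext cs), (Int [(l0,t0)]). split; [auto|split; [apply unfolds_refl; intros ? ? ?; discriminate|]].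
           simpl. exists cs. split; auto. split; [congruence|]. intros l1 s1 [E|[]]. inversion E; subst. auto.
      * apply step_Mu in Hst. destruct Hst as [_ ->]. exists ur, us. split; auto. split; auto. apply unfolds_Mu_inv; auto.
    + destruct (notMu_or r) as [Nr|(x&r0&->)];
        [|apply step_Mu in Hs1; destruct Hs1 as [-> _]; destruct a2; contradiction].
      destruct (notMu_or s) as [Ns|(x&s0&->)];
        [|apply step_Mu in Hs2; destruct Hs2 as [-> _]; destruct a1; contradiction].
      apply unfolds_self in Hur; auto. apply unfolds_self in Hus; auto. subst ur us.
      destruct s as [|t0 s|t0 s|m0 s|m0 s|bs|bs|x0 s|x0]; simpl in HM; try contradiction.
      * subst. apply step_One in Hs2. subst. destruct a1; contradiction.
      * destruct HM as (t'&r0&->&_&HQ0). apply step_InT in Hs2. apply step_OutT in Hs1.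
        destruct Hs1, Hs2; subst. apply HQ; auto.
      * destruct HM as (t'&r0&->&_&HQ0). apply step_OutT in Hs2. apply step_InT in Hs1.
        destruct Hs1, Hs2; subst. apply HQ; auto.
      * destruct HM as (t'&r0&->&_&HQ0). apply step_OutS in Hs2. apply step_InS in Hs1.
        destruct Hs1, Hs2; subst. apply HQ; auto.
      * destruct HM as (t'&r0&->&_&HQ0). apply step_InS in Hs2. apply step_OutS in Hs1.
        destruct Hs1, Hs2; subst. apply HQ; auto.
      * destruct HM as (cs&->&Hne&Hc). apply step_Ext in Hs2. destruct Hs2 as (l2&->&Hin2).
        apply step_Int in Hs1. destruct Hs1 as [(->&_)|(l1&->&->)]; [contradiction|].
        simpl in Hd. subst. apply HQ. eapply (proj2 (Hc _ _ (or_introl eq_refl))); eauto.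
      * destruct HM as (cs&->&Hne&Hc). apply step_Ext in Hs1. destruct Hs1 as (l1&->&Hin1).
        apply step_Int in Hs2. destruct Hs2 as [(->&_)|(l2&->&->)]; [destruct (AInL l1); contradiction|].
        simpl in Hd. subst. apply HQ. eapply (proj2 (Hc _ _ (or_introl eq_refl))); eauto.
Qed.
End Match.


Fixpoint dE (e : nat -> term) (s : term) : term :=
  match s with
  | One => One
  | InT t s => OutT t (dE e s)
  | OutT t s => InT t (dE e s)
  | OutS m s => InS (psub e m) (dE e s)
  | InS m s => OutS (psub e m) (dE e s)
  | Ext bs => Int (map (fun p => (fst p, dE e (snd p))) bs)
  | Int bs => Ext (map (fun p => (fst p, dE e (snd p))) bs)
  | Mu x s => Mu x (dE (upd e x (psub e (Mu x s))) s)
  | Var x => Var x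
  end.

Lemma dE_free t : forall e z, free_in z (dE e t) -> free_in z t \/ exists w, free_in w t /\ free_in z (e w).
Proof.
  induction t using tind; intros e z Hz; simpl in Hz.
  - contradiction.
  - destruct (IHt e z Hz) as [?|(w&?&?)]; [left|right]; eauto.
  - destruct (IHt e z Hz) as [?|(w&?&?)]; [left|right]; eauto.
  - destruct Hz as [Hz|Hz].
    + apply psub_free in Hz. destruct Hz as (w&?&?). right. exists w; simpl; auto.
    + destruct (IHt2 e z Hz) as [?|(w&?&?)]; [left|right]; simpl; eauto.
  - destruct Hz as [Hz|Hz].
    + apply psub_free in Hz. destruct Hz as (w&?&?). right. exists w; simpl; auto.
    + destruct (IHt2 e z Hz) as [?|(w&?&?)]; [left|right]; simpl; eauto.
  - change (free_in z (Int (mapb (dE e) bs))) in Hz. apply free_Int in Hz.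
    destruct Hz as (l&t&Hin&Hf). apply in_mapb in Hin. destruct Hin as (t0&Hin&->).
    destruct (H l t0 Hin e z Hf) as [?|(w&?&?)]; [left|right]; [apply free_Ext; eauto|].
    exists w; split; auto. apply free_Ext; eauto.
  - change (free_in z (Ext (mapb (dE e) bs))) in Hz. apply free_Ext in Hz.
    destruct Hz as (l&t&Hin&Hf). apply in_mapb in Hin. destruct Hin as (t0&Hin&->).
    destruct (H l t0 Hin e z Hf) as [?|(w&?&?)]; [left|right]; [apply free_Int; eauto|].
    exists w; split; auto. apply free_Int; eauto.
  - destruct Hz as [Hne Hz]. destruct (IHt _ _ Hz) as [Hf|(w&Hw&Hf)].
    + left. simpl; auto.
    + destruct (Nat.eqb_spec x w).
      * subst w. rewrite upd_eq in Hf. change (free_in z (psub e (Mu x t))) in Hf. apply psub_free in Hf. destruct Hf as (w'&?&?). right. eauto.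
      * rewrite upd_neq in Hf by auto. right. exists w. simpl; auto.
  - left. simpl in *. auto.
Qed.

Lemma dE_unguarded t : forall e z, unguarded z (dE e t) -> unguarded z t.
Proof.
  induction t using tind; intros e z Hz; simpl in *; try tauto.
  destruct Hz as [? Hz]. split; eauto.
Qed.

Lemma SC_psub t e : guarded t -> wf t -> (forall w, free_in w t -> SC (e w)) -> SC (psub e t).
Proof.
  intros G W H. split; [|split].
  - intros z Hz. apply psub_free in Hz. destruct Hz as (w&Hw&Hz). destruct (H w Hw) as (C&_). eapply C; eauto.
  - apply psub_guarded; auto. intros w Hw. destruct (H w Hw) as (C&G'&_). auto.
  - apply psub_wf; auto. intros w Hw. apply H; auto.
Qed.

Lemma dE_guarded t : forall e, guarded t -> wf t -> (forall w, free_in w t -> SC (e w)) -> guarded (dE e t).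
Proof.
  induction t using tind; intros e G W He; simpl in *; auto.
  - destruct G, W. split; [apply SC_psub; auto|apply IHt2; auto].
  - destruct G, W. split; [apply SC_psub; auto|apply IHt2; auto].
  - change (guarded (Int (mapb (dE e) bs))). apply guarded_Int. intros l t Hin.
    apply in_mapb in Hin. destruct Hin as (t0&Hin&->). change (guarded (Ext bs)) in G.
    change (wf (Ext bs)) in W. rewrite guarded_Ext in G. rewrite wf_Ext in W.
    apply H with l; eauto. apply W in Hin; auto. intros w Hw. apply He. apply free_Ext; eauto.
  - change (guarded (Ext (mapb (dE e) bs))). apply guarded_Ext. intros l t Hin.
    apply in_mapb in Hin. destruct Hin as (t0&Hin&->). change (guarded (Int bs)) in G.
    change (wf (Int bs)) in W. rewrite guarded_Int in G. rewrite wf_Int in W.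
    apply H with l; eauto. apply W in Hin; auto. intros w Hw. apply He. apply free_Int; eauto.
  - destruct G as [Gn G]. split.
    + intros Hu. apply dE_unguarded in Hu. auto.
    + apply IHt; auto. intros w Hw. destruct (Nat.eqb_spec x w).
      * subst w. rewrite upd_eq. apply (SC_psub (Mu x t)); simpl; auto.
      * rewrite upd_neq by auto. apply He; auto.
Qed.

Lemma dE_wf t : forall e, guarded t -> wf t -> (forall w, free_in w t -> SC (e w)) -> wf (dE e t).
Proof.
  induction t using tind; intros e G W He; simpl in *; auto.
  - destruct W, G. split; [apply psub_wf; auto|apply IHt2; auto].
    intros w Hw. apply He; auto.
  - destruct W, G. split; [apply psub_wf; auto|apply IHt2; auto].
    intros w Hw. apply He; auto.
  - change (wf (Int (mapb (dE e) bs))). apply wf_Int. change (wf (Ext bs)) in W.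
    change (guarded (Ext bs)) in G. rewrite guarded_Ext in G.
    apply wf_Ext in W. destruct W as (Hn&Hd&Hw). rewrite fst_mapb, mapb_nil. repeat split; auto.
    intros l t Hin. apply in_mapb in Hin. destruct Hin as (t0&Hin&->).
    apply H with l; eauto. intros w Hw'. apply He. apply free_Ext; eauto.
  - change (wf (Ext (mapb (dE e) bs))). apply wf_Ext. change (wf (Int bs)) in W.
    change (guarded (Int bs)) in G. rewrite guarded_Int in G.
    apply wf_Int in W. destruct W as (Hn&Hd&Hw). rewrite fst_mapb, mapb_nil. repeat split; auto.
    intros l t Hin. apply in_mapb in Hin. destruct Hin as (t0&Hin&->).
    apply H with l; eauto. intros w Hw'. apply He. apply free_Int; eauto.
  - destruct G as [Gn G]. apply IHt; auto. intros w Hw. destruct (Nat.eqb_spec x w).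
    + subst w. rewrite upd_eq. apply (SC_psub (Mu x t)); simpl; auto.
    + rewrite upd_neq by auto. apply He; auto.
Qed.


Inductive DQ : term -> term -> Prop :=
| DQi : forall t e ce, guarded t -> wf t ->
   (forall x, free_in x t -> SC (e x)) -> (forall x, free_in x t -> closed (ce x)) ->
   (forall x, free_in x t -> DQ (ce x) (e x)) -> DQ (psub ce (dE e t)) (psub e t).

Lemma closed_psub t e : (forall w, free_in w t -> closed (e w)) -> closed (psub e t).
Proof. intros H z Hz. apply psub_free in Hz. destruct Hz as (w&Hw&Hz). eapply H; eauto. Qed.

Ltac mrefl := eexists; eexists; split; [apply unfolds_refl; intros ? ? ?; discriminate|];
  split; [apply unfolds_refl; intros ? ? ?; discriminate|]; unfold MatchU; cbv beta iota.

Section DQs.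
Variable B : term -> term -> Prop.
Hypothesis HB : forall m, SC m -> B m m.
Hypothesis Hl : forall t, leb t t.

Lemma DQ_inner t : forall e ce, guarded t -> wf t ->
  (forall x, free_in x t -> SC (e x)) -> (forall x, free_in x t -> closed (ce x)) ->
  (forall x, free_in x t -> DQ (ce x) (e x)) ->
  (forall x, unguarded x t -> Match B DQ (ce x) (e x)) ->
  Match B DQ (psub ce (dE e t)) (psub e t).
Proof.
  induction t as [| t0 s IH | t0 s IH | m s IHm IH | m s IHm IH | bs IH | bs IH | x s IH | x]
    using tind; intros e ce G W H1 H2 H3 H4.
  - mrefl. reflexivity.
  - cbn [psub dE]. mrefl. exists t0, (psub ce (dE e s)). split; [reflexivity|split; [apply Hl|]].
    apply DQi; auto; intros; first [apply H1|apply H2|apply H3]; simpl; auto.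
  - cbn [psub dE]. mrefl. exists t0, (psub ce (dE e s)). split; [reflexivity|split; [apply Hl|]].
    apply DQi; auto; intros; first [apply H1|apply H2|apply H3]; simpl; auto.
  - destruct G as [Gm Gs]. destruct W as [Wm Ws].
    cbn [psub dE]. mrefl. exists (psub ce (psub e m)), (psub ce (dE e s)). split; [reflexivity|split].
    + rewrite (psub_closed (psub e m)).
      * apply HB. apply SC_psub; auto. intros; apply H1; simpl; auto.
      * apply closed_psub. intros w Hw. apply H1; simpl; auto.
    + apply DQi; auto; intros; first [apply H1|apply H2|apply H3]; simpl; auto.
  - destruct G as [Gm Gs]. destruct W as [Wm Ws].
    cbn [psub dE]. mrefl. exists (psub ce (psub e m)), (psub ce (dE e s)). split; [reflexivity|split].
    + rewrite (psub_closed (psub e m)).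
      * apply HB. apply SC_psub; auto. intros; apply H1; simpl; auto.
      * apply closed_psub. intros w Hw. apply H1; simpl; auto.
    + apply DQi; auto; intros; first [apply H1|apply H2|apply H3]; simpl; auto.
  - change (Match B DQ (Int (mapb (psub ce) (mapb (dE e) bs))) (Ext (mapb (psub e) bs))).
    change (guarded (Ext bs)) in G. rewrite guarded_Ext in G.
    change (wf (Ext bs)) in W. rewrite wf_Ext in W. destruct W as (Wn&Wd&Wl).
    mrefl. exists (mapb (psub ce) (mapb (dE e) bs)). split; [reflexivity|].
    split; [rewrite !mapb_nil; auto|].
    intros l r' Hin. apply in_mapb in Hin. destruct Hin as (r0&Hin&->).
    apply in_mapb in Hin. destruct Hin as (t1&Hin&->). split.
    + exists (psub e t1). apply in_mapb; eauto.
    + intros s' Hs'. apply in_mapb in Hs'. destruct Hs' as (t2&Hin2&->).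
      rewrite (nodup_fun bs l t2 t1) by auto.
      apply DQi; eauto; intros; first [apply H1|apply H2|apply H3]; apply free_Ext; eauto.
  - change (Match B DQ (Ext (mapb (psub ce) (mapb (dE e) bs))) (Int (mapb (psub e) bs))).
    change (guarded (Int bs)) in G. rewrite guarded_Int in G.
    change (wf (Int bs)) in W. rewrite wf_Int in W. destruct W as (Wn&Wd&Wl).
    mrefl. exists (mapb (psub ce) (mapb (dE e) bs)). split; [reflexivity|].
    split; [rewrite !mapb_nil; auto|].
    intros l s' Hin. apply in_mapb in Hin. destruct Hin as (t1&Hin&->). split.
    + exists (psub ce (dE e t1)). apply in_mapb. exists (dE e t1). split; auto. apply in_mapb; eauto.
    + intros r' Hr'. apply in_mapb in Hr'. destruct Hr' as (r0&Hr'&->).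
      apply in_mapb in Hr'. destruct Hr' as (t2&Hin2&->).
      rewrite (nodup_fun bs l t2 t1) by auto.
      apply DQi; eauto; intros; first [apply H1|apply H2|apply H3]; apply free_Int; eauto.
  - destruct G as [Gn G].
    pose (S := psub e (Mu x s)).
    pose (e' := upd e x S).
    pose (r := psub ce (dE e (Mu x s))).
    pose (ce' := upd ce x r).
    assert (SCS : SC S). { apply (SC_psub (Mu x s)); simpl; auto. }
    assert (Cr : closed r).
    { intros z Hz. unfold r in Hz. apply psub_free in Hz. destruct Hz as (w&Hw&Hz).
      apply dE_free in Hw. destruct Hw as [Hw|(w'&Hw'&Hf)].
      - eapply H2; eauto.
      - destruct (H1 w' Hw') as (C&_). eapply C; eauto. }
    assert (DQrS : DQ r S). { unfold r, S. apply DQi; simpl; auto. }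
    destruct (IH e' ce') as (ur&us&Hur&Hus&HM); auto.
    + intros w Hw. destruct (Nat.eqb_spec x w).
      * subst w. unfold e'. rewrite upd_eq. auto.
      * unfold e'. rewrite upd_neq by auto. apply H1; simpl; auto.
    + intros w Hw. destruct (Nat.eqb_spec x w).
      * subst w. unfold ce'. rewrite upd_eq. auto.
      * unfold ce'. rewrite upd_neq by auto. apply H2; simpl; auto.
    + intros w Hw. destruct (Nat.eqb_spec x w).
      * subst w. unfold ce', e'. rewrite !upd_eq. auto.
      * unfold ce', e'. rewrite !upd_neq by auto. apply H3; simpl; auto.
    + intros w Hw. destruct (Nat.eqb_spec x w).
      * subst w. contradiction.
      * unfold ce', e'. rewrite !upd_neq by auto. apply H4; simpl; auto.
    + exists ur, us. split; [|split; auto].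
      * change (unfolds (Mu x (psub (upd ce x (Var x)) (dE e' s))) ur). constructor.
        change (unfolds (subst (psub (upd ce x (Var x)) (dE e' s)) x r) ur).
        rewrite E1; auto. intros w Hw Hne. apply subst_closed.
        apply dE_free in Hw. destruct Hw as [Hw|(w'&Hw'&Hf)].
        -- apply H2; simpl; auto.
        -- exfalso. destruct (Nat.eqb_spec x w').
           ++ subst w'. unfold e' in Hf. rewrite upd_eq in Hf. destruct SCS as (C&_). eapply C; eauto.
           ++ unfold e' in Hf. rewrite upd_neq in Hf by auto. destruct (H1 w') as (C&_); [simpl; auto|].
              eapply C; eauto.
      * change (unfolds (Mu x (psub (upd e x (Var x)) s)) us). constructor.
        change (unfolds (subst (psub (upd e x (Var x)) s) x S) us).
        rewrite E1; auto. intros w Hw Hne. apply subst_closed. apply H1; simpl; auto.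
  - cbn [psub dE]. apply H4. simpl. auto.
Qed.

Lemma DQ_match r s : DQ r s -> Match B DQ r s.
Proof.
  induction 1 as [t e ce G W H1 H2 H3 IH]. apply DQ_inner; auto.
  intros x Hx. apply IH. apply unguarded_free; auto.
Qed.

Lemma client_ok s : SC s -> SC (dE (fun x => Var x) s) /\ complies B (dE (fun x => Var x) s) s.
Proof.
  intros Hs. pose proof Hs as (C&G&W). split; [split; [|split]|].
  - intros z Hz. apply dE_free in Hz. destruct Hz as [Hz|(w&Hw&_)]; eapply C; eauto.
  - apply dE_guarded; auto. intros w Hw; exfalso; eapply C; eauto.
  - apply dE_wf; auto. intros w Hw; exfalso; eapply C; eauto.
  - apply (match_complies B DQ DQ_match).
    rewrite <- (psub_id (dE _ s)). rewrite <- (psub_id s) at 2.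
    apply DQ_match. apply DQi; auto; intros w Hw; exfalso; eapply C; eauto.
Qed.
End DQs.


Local Notation Sfun := (@Sfun BT L leb).
Local Notation nuS := (@nuS BT L leb).
Local Notation subB := (@subB BT L leb).

Definition SfunAt (R B : term -> term -> Prop) (u1 s2 : term) : Prop :=
  match u1 with
  | One => unfolds s2 One
  | InT t1 s1' => exists t2 s2', unfolds s2 (InT t2 s2') /\ R s1' s2' /\ leb t1 t2
  | OutT t1 s1' => exists t2 s2', unfolds s2 (OutT t2 s2') /\ R s1' s2' /\ leb t2 t1
  | OutS m1 s1' => exists m2 s2', unfolds s2 (OutS m2 s2') /\ R s1' s2' /\ B m2 m1
  | InS m1 s1' => exists m2 s2', unfolds s2 (InS m2 s2') /\ R s1' s2' /\ B m1 m2
  | Ext bs1 => exists bs2, unfolds s2 (Ext bs2) /\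
      forall l s1', In (l, s1') bs1 -> exists s2', In (l, s2') bs2 /\ R s1' s2'
  | Int bs1 => exists bs2, unfolds s2 (Int bs2) /\
      forall l s2', In (l, s2') bs2 -> exists s1', In (l, s1') bs1 /\ R s1' s2'
  | Mu _ _ | Var _ => False
  end.

Lemma Sfun_At R B s1 s2 : Sfun R B s1 s2 <-> (forall u1, unfolds s1 u1 -> SfunAt R B u1 s2).
Proof. reflexivity. Qed.

Lemma SfunAt_mono (R R' B B' : term -> term -> Prop) u s :
  (forall a b, R a b -> R' a b) -> (forall a b, B a b -> B' a b) -> SfunAt R B u s -> SfunAt R' B' u s.
Proof.
  intros HR HB H. destruct u; simpl in *; auto.
  - destruct H as (t2&s2&?&?&?). eauto 10.
  - destruct H as (t2&s2&?&?&?). eauto 10.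
  - destruct H as (t2&s2&?&?&?). eauto 10.
  - destruct H as (t2&s2&?&?&?). eauto 10.
  - destruct H as (bs2&?&H). exists bs2. split; auto. intros l0 s1' Hin. destruct (H l0 s1' Hin) as (?&?&?); eauto.
  - destruct H as (bs2&?&H). exists bs2. split; auto. intros l0 s1' Hin. destruct (H l0 s1' Hin) as (?&?&?); eauto.
Qed.

Lemma SfunAt_step (R B : term -> term -> Prop) u s s' :
  (forall X, unfolds s X -> unfolds s' X) -> SfunAt R B u s -> SfunAt R B u s'.
Proof.
  intros HU H. destruct u; simpl in *; auto.
  - destruct H as (t2&s2&?&?&?). eauto 10.
  - destruct H as (t2&s2&?&?&?). eauto 10.
  - destruct H as (t2&s2&?&?&?). eauto 10.
  - destruct H as (t2&s2&?&?&?). eauto 10.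
  - destruct H as (bs2&?&H). eauto.
  - destruct H as (bs2&?&H). eauto.
Qed.

Lemma nuS_coind (X : term -> term -> Prop) :
  (forall x y, X x y -> SC x /\ SC y /\ Sfun X X x y) -> forall a b, X a b -> nuS a b.
Proof. intros H a b Hab. exists X. auto. Qed.

Lemma nuS_post a b : nuS a b -> SC a /\ SC b /\ Sfun nuS nuS a b.
Proof.
  intros (X&HX&Hab). destruct (HX a b Hab) as (Ha&Hb&HS). split; [auto|split; [auto|]].
  intros u Hu. eapply SfunAt_mono; [| |apply HS; auto]; intros; eapply nuS_coind; eauto.
Qed.

Hypothesis Hpre : PreOrder leb.

Lemma leb_refl t : leb t t.
Proof. apply Hpre. Qed.
Lemma leb_trans a b c : leb a b -> leb b c -> leb a c.
Proof. apply Hpre. Qed.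

Lemma nuS_refl s : SC s -> nuS s s.
Proof.
  intros Hs. apply (nuS_coind (fun a b => a = b /\ SC a)); auto.
  clear -Hpre. intros x y [<- Hx]. split; [auto|split; [auto|]]. intros u Hu.
  pose proof (SC_unfolds _ _ Hu Hx) as Hsu. pose proof (unfolds_notMu _ _ Hu) as Nu.
  destruct u; simpl.
  - auto.
  - exists b, u. split; [auto|split; [split; [auto|eapply SC_InT; eauto]|apply leb_refl]].
  - exists b, u. split; [auto|split; [split; [auto|eapply SC_OutT; eauto]|apply leb_refl]].
  - exists u1, u2. apply SC_OutS in Hsu. split; [auto|split; [split; [auto|tauto]|split; [auto|tauto]]].
  - exists u1, u2. apply SC_InS in Hsu. split; [auto|split; [split; [auto|tauto]|split; [auto|tauto]]].
  - exists l. split; auto. intros l0 s1' Hin. exists s1'. split; auto. split; auto. eapply SC_Ext; eauto.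
  - exists l. split; auto. intros l0 s1' Hin. exists s1'. split; auto. split; auto. eapply SC_Int; eauto.
  - eapply Nu; eauto.
  - eapply SC_Var; eauto.
Qed.

Lemma nuS_trans a b c : nuS a b -> nuS b c -> nuS a c.
Proof.
  intros Hab Hbc. apply (nuS_coind (fun x z => exists y, nuS x y /\ nuS y z)); eauto.
  clear -Hpre. intros x z (y&Hxy&Hyz).
  destruct (nuS_post _ _ Hxy) as (Hx&Hy&S1). destruct (nuS_post _ _ Hyz) as (_&Hz&S2).
  split; [auto|split; [auto|]]. intros u1 Hu1. specialize (S1 u1 Hu1).
  destruct u1; simpl in S1 |- *.
  - apply (S2 One S1).
  - destruct S1 as (t2&y'&Hu2&H1&L1). destruct (S2 _ Hu2) as (t3&z'&Hu3&H2&L2).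
    exists t3, z'. split; [auto|split; [eauto|eapply leb_trans; eauto]].
  - destruct S1 as (t2&y'&Hu2&H1&L1). destruct (S2 _ Hu2) as (t3&z'&Hu3&H2&L2).
    exists t3, z'. split; [auto|split; [eauto|eapply leb_trans; eauto]].
  - destruct S1 as (t2&y'&Hu2&H1&L1). destruct (S2 _ Hu2) as (t3&z'&Hu3&H2&L2).
    exists t3, z'. split; [auto|split; eauto].
  - destruct S1 as (t2&y'&Hu2&H1&L1). destruct (S2 _ Hu2) as (t3&z'&Hu3&H2&L2).
    exists t3, z'. split; [auto|split; eauto].
  - destruct S1 as (bs2&Hu2&H1). destruct (S2 _ Hu2) as (bs3&Hu3&H2).
    exists bs3. split; auto. intros l0 x' Hin. destruct (H1 _ _ Hin) as (y'&Hin2&Hxy').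
    destruct (H2 _ _ Hin2) as (z'&Hin3&Hyz'). eauto.
  - destruct S1 as (bs2&Hu2&H1). destruct (S2 _ Hu2) as (bs3&Hu3&H2).
    exists bs3. split; auto. intros l0 z' Hin. destruct (H2 _ _ Hin) as (y'&Hin2&Hyz').
    destruct (H1 _ _ Hin2) as (x'&Hin1&Hxy'). eauto.
  - contradiction.
  - contradiction.
Qed.


Lemma act_OutT r t r' : step r (AOutT t) r' -> r = OutT t r'.
Proof. intros H; inversion H; auto. Qed.
Lemma act_InT r t r' : step r (AInT t) r' -> r = InT t r'.
Proof. intros H; inversion H; auto. Qed.
Lemma act_OutS r t r' : step r (AOutS t) r' -> r = OutS t r'.
Proof. intros H; inversion H; auto. Qed.
Lemma act_InS r t r' : step r (AInS t) r' -> r = InS t r'.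
Proof. intros H; inversion H; auto. Qed.
Lemma act_InL r l r' : step r (AInL l) r' -> exists cs, r = Ext cs /\ In (l, r') cs.
Proof. intros H; inversion H; eauto. Qed.
Lemma act_OutL r l r' : step r (AOutL l) r' -> r = Int [(l, r')].
Proof. intros H; inversion H; auto. Qed.

Lemma comp_Int1 B a bs l x : complies B a (Int bs) -> In (l,x) bs -> complies B a (Int [(l,x)]).
Proof.
  intros H Hin. destruct bs as [|p [|q bs']].
  - destruct Hin.
  - destruct Hin as [<-|[]]. auto.
  - eapply comp_next; eauto. apply pt_right. apply st_int; auto. simpl; lia.
Qed.

Definition Rel (a s : term) : Prop :=
  SC s /\ exists u, SC u /\ notMu u /\ complies nuS a u /\ SfunAt nuS nuS u s.

Lemma Rel_intro a x y : SC y -> nuS x y -> complies nuS a x -> Rel a y.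
Proof.
  intros Hy Hxy Ha. destruct (nuS_post _ _ Hxy) as (Hx&_&HS).
  destruct (SC_ex_unf x Hx) as (u&Hu). split; auto. exists u. split; [eapply SC_unfolds; eauto|].
  split; [eapply unfolds_notMu; eauto|]. split; [eapply comp_unf_fwd; eauto|]. apply HS; auto.
Qed.

Ltac dinv Hd := match type of Hd with dual _ ?a ?b =>
  first [is_var a; destruct a | idtac]; first [is_var b; destruct b | idtac];
  simpl in Hd; try contradiction end.

Lemma Rel_post : compliance_post nuS Rel.
Proof.
  intros a s (SCs&u&SCu&Nu&Ca&HS). split.
  - intros Hst.
    assert (Na : forall a', ~ step a ATau a') by (intros a' H; eapply Hst; apply pt_left; eauto).
    assert (Ns : notMu s) by (intros x s' ->; eapply Hst; apply pt_right; constructor).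
    destruct u as [|t1 x'|t1 x'|m1 x'|m1 x'|bs1|bs1|x0 s0|x0]; simpl in HS.
    + apply unfolds_self in HS; auto. subst s. split; [|exists One; constructor].
      apply (comp_stuck nuS a One Ca). intros a' s' Hp. inversion Hp; subst.
      * eapply Na; eauto.
      * apply step_One in H. discriminate.
      * apply step_One in H0. subst. dinv H1.
    + destruct HS as (t2&y'&Hu2&Hxy&L12). apply unfolds_self in Hu2; auto. subst s.
      destruct (comp_prog_s _ _ _ Ca) as (a'&s'&Hp); [discriminate|]. exfalso.
      inversion Hp; subst.
      * eapply Na; eauto.
      * apply step_InT in H. destruct H; discriminate.
      * apply step_InT in H0. destruct H0 as [-> ->]. dinv H1.
        eapply Hst. eapply pt_sync; [eauto|constructor|]. simpl. eapply leb_trans; eauto.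
    + destruct HS as (t2&y'&Hu2&Hxy&L12). apply unfolds_self in Hu2; auto. subst s.
      destruct (comp_prog_s _ _ _ Ca) as (a'&s'&Hp); [discriminate|]. exfalso.
      inversion Hp; subst.
      * eapply Na; eauto.
      * apply step_OutT in H. destruct H; discriminate.
      * apply step_OutT in H0. destruct H0 as [-> ->]. dinv H1.
        eapply Hst. eapply pt_sync; [eauto|constructor|]. simpl. eapply leb_trans; eauto.
    + destruct HS as (t2&y'&Hu2&Hxy&L12). apply unfolds_self in Hu2; auto. subst s.
      destruct (comp_prog_s _ _ _ Ca) as (a'&s'&Hp); [discriminate|]. exfalso.
      inversion Hp; subst.
      * eapply Na; eauto.
      * apply step_OutS in H. destruct H; discriminate.
      * apply step_OutS in H0. destruct H0 as [-> ->]. dinv H1.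
        eapply Hst. eapply pt_sync; [eauto|constructor|]. simpl. eapply nuS_trans; eauto.
    + destruct HS as (t2&y'&Hu2&Hxy&L12). apply unfolds_self in Hu2; auto. subst s.
      destruct (comp_prog_s _ _ _ Ca) as (a'&s'&Hp); [discriminate|]. exfalso.
      inversion Hp; subst.
      * eapply Na; eauto.
      * apply step_InS in H. destruct H; discriminate.
      * apply step_InS in H0. destruct H0 as [-> ->]. dinv H1.
        eapply Hst. eapply pt_sync; [eauto|constructor|]. simpl. eapply nuS_trans; eauto.
    + destruct HS as (bs2&Hu2&Hinc). apply unfolds_self in Hu2; auto. subst s.
      destruct (comp_prog_s _ _ _ Ca) as (a'&s'&Hp); [discriminate|]. exfalso.
      inversion Hp; subst.
      * eapply Na; eauto.
      * apply step_Ext in H. destruct H as (?&?&_); discriminate.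
      * apply step_Ext in H0. destruct H0 as (l&->&Hin). dinv H1. subst.
        destruct (Hinc _ _ Hin) as (y'&Hin2&_).
        eapply Hst. eapply pt_sync; [eauto|apply st_ext; eauto|]. simpl. auto.
    + destruct HS as (bs2&Hu2&Hinc). apply unfolds_self in Hu2; auto. subst s.
      exfalso. destruct (SC_Int_wf _ SCs) as [Hne _].
      destruct bs2 as [|[l y'] [|q bs2']]; [congruence| |].
      2:{ eapply Hst. apply pt_right. apply st_int with (l:=l) (s:=y'); simpl; auto. lia. }
      destruct (Hinc l y' (or_introl eq_refl)) as (x'&Hin1&_).
      pose proof (comp_Int1 _ _ _ _ _ Ca Hin1) as Ca1.
      destruct (comp_prog_s _ _ _ Ca1) as (a'&s'&Hp); [discriminate|].
      inversion Hp; subst.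
      * eapply Na; eauto.
      * apply step_Int in H. destruct H as [(_&Hl&_)|(?&?&?)]; [simpl in Hl; lia|discriminate].
      * apply step_Int in H0. destruct H0 as [(->&_)|(l2&E&->)]; [dinv H1|].
        inversion E; subst. dinv H1. subst.
        eapply Hst. eapply pt_sync; [eauto|constructor|]. simpl. auto.
    + contradiction.
    + contradiction.
  - intros a' s' Hp. inversion Hp as [a0 a1 s0 Hsa|a0 s0 s1 Hss|a0 a1 s0 s1 b1 b2 Hs1 Hs2 Hd]; subst.
    + split; auto. exists u. split; [auto|split; [auto|split; [|auto]]]. eapply comp_next; eauto. apply pt_left; auto.
    + destruct (notMu_or s) as [Ns|(x&s0&->)].
      2:{ apply step_Mu in Hss. destruct Hss as [_ ->]. split; [apply SC_Mu_step; auto|].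
          exists u. split; [auto|split; [auto|split; [auto|]]]. eapply SfunAt_step; [|eauto]. apply unfolds_Mu_inv. }
      inversion Hss; subst; [|exfalso; eapply Ns; eauto].
      destruct u as [|t1 x'|t1 x'|m1 x'|m1 x'|bs1|bs1|x0 s00|x0]; simpl in HS;
        try contradiction;
        try (destruct HS as (?&?&Hu2&_); apply unfolds_self in Hu2; [discriminate|auto]; fail);
        try (apply unfolds_self in HS; [discriminate|auto]; fail).
      * destruct HS as (?&Hu2&_). apply unfolds_self in Hu2; [discriminate|auto].
      * destruct HS as (bs2&Hu2&Hinc). apply unfolds_self in Hu2; auto. inversion Hu2; subst.
        destruct (Hinc _ _ H0) as (x'&Hin1&Hxy). unfold Rel.
        split; [apply (SC_Int1 bs); auto|]. exists (Int [(l,x')]).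
        split; [apply (SC_Int1 bs1); auto|]. split; [intros ? ? ?; discriminate|].
        split; [eapply comp_Int1; eauto|]. simpl. exists [(l,s0)]. split; [apply unfolds_refl; intros ? ? ?; discriminate|].
        intros l0 s2 [E|[]]. inversion E; subst. eauto.
    + destruct (notMu_or s) as [Ns|(x&s0&->)].
      2:{ apply step_Mu in Hs2. destruct Hs2 as [-> _]. dinv Hd. }
      destruct u as [|t1 x'|t1 x'|m1 x'|m1 x'|bs1|bs1|x0 s00|x0]; simpl in HS; try contradiction.
      * apply unfolds_self in HS; auto. subst s. apply step_One in Hs2. subst. dinv Hd.
      * destruct HS as (t2&y'&Hu2&Hxy&L12). apply unfolds_self in Hu2; auto. subst s.
        apply step_InT in Hs2. destruct Hs2 as [-> ->]. dinv Hd. apply act_OutT in Hs1. subst a.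
        destruct (comp_prog_s _ _ _ Ca) as (a''&x''&Hp'); [discriminate|].
        inversion Hp'; subst.
        -- apply step_OutT in H. destruct H; discriminate.
        -- apply step_InT in H. destruct H; discriminate.
        -- apply step_OutT in H. apply step_InT in H0. destruct H as [-> ->]. destruct H0 as [-> ->].
           apply (Rel_intro a' x' y'); [eapply SC_InT; eauto|auto|eapply comp_next; eauto].
      * destruct HS as (t2&y'&Hu2&Hxy&L12). apply unfolds_self in Hu2; auto. subst s.
        apply step_OutT in Hs2. destruct Hs2 as [-> ->]. dinv Hd. apply act_InT in Hs1. subst a.
        destruct (comp_prog_s _ _ _ Ca) as (a''&x''&Hp'); [discriminate|].
        inversion Hp'; subst.
        -- apply step_InT in H. destruct H; discriminate.
        -- apply step_OutT in H. destruct H; discriminate.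
        -- apply step_InT in H. apply step_OutT in H0. destruct H as [-> ->]. destruct H0 as [-> ->].
           apply (Rel_intro a' x' y'); [eapply SC_OutT; eauto|auto|eapply comp_next; eauto].
      * destruct HS as (t2&y'&Hu2&Hxy&L12). apply unfolds_self in Hu2; auto. subst s.
        apply step_OutS in Hs2. destruct Hs2 as [-> ->]. dinv Hd. apply act_InS in Hs1. subst a.
        destruct (comp_prog_s _ _ _ Ca) as (a''&x''&Hp'); [discriminate|].
        inversion Hp'; subst.
        -- apply step_InS in H. destruct H; discriminate.
        -- apply step_OutS in H. destruct H; discriminate.
        -- apply step_InS in H. apply step_OutS in H0. destruct H as [-> ->]. destruct H0 as [-> ->].
           apply (Rel_intro a' x' y'); [eapply SC_OutS; eauto|auto|eapply comp_next; eauto].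
      * destruct HS as (t2&y'&Hu2&Hxy&L12). apply unfolds_self in Hu2; auto. subst s.
        apply step_InS in Hs2. destruct Hs2 as [-> ->]. dinv Hd. apply act_OutS in Hs1. subst a.
        destruct (comp_prog_s _ _ _ Ca) as (a''&x''&Hp'); [discriminate|].
        inversion Hp'; subst.
        -- apply step_OutS in H. destruct H; discriminate.
        -- apply step_InS in H. destruct H; discriminate.
        -- apply step_OutS in H. apply step_InS in H0. destruct H as [-> ->]. destruct H0 as [-> ->].
           apply (Rel_intro a' x' y'); [eapply SC_InS; eauto|auto|eapply comp_next; eauto].
      * destruct HS as (bs2&Hu2&Hinc). apply unfolds_self in Hu2; auto. subst s.
        apply step_Ext in Hs2. destruct Hs2 as (l&->&Hin2). dinv Hd. subst. apply act_OutL in Hs1. subst a.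
        destruct (comp_prog_s _ _ _ Ca) as (a''&x''&Hp'); [discriminate|].
        inversion Hp'; subst.
        -- apply step_Int in H. destruct H as [(_&Hl&_)|(?&?&?)]; [simpl in Hl; lia|discriminate].
        -- apply step_Ext in H. destruct H as (?&?&_); discriminate.
        -- apply step_Int in H. destruct H as [(->&_)|(l1&E&->)]; [dinv H1|]. inversion E; subst.
           apply step_Ext in H0. destruct H0 as (l2&->&Hin1). dinv H1. subst.
           destruct (Hinc _ _ Hin1) as (y''&Hin2'&Hxy).
           destruct (SC_Ext_wf _ SCs) as [_ Hnd].
           rewrite (nodup_fun _ _ _ _ Hnd Hin2 Hin2').
           apply (Rel_intro a'' x'' y''); [apply (SC_Ext bs2 l2); auto|auto|eapply comp_next; eauto].
      * destruct HS as (bs2&Hu2&Hinc). apply unfolds_self in Hu2; auto. subst s.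
        apply step_Int in Hs2. destruct Hs2 as [(->&_)|(l&->&->)]; [dinv Hd|].
        dinv Hd. subst. apply act_InL in Hs1. destruct Hs1 as (cs&->&Hinc').
        destruct (Hinc _ _ (or_introl eq_refl)) as (x'&Hin1&Hxy).
        pose proof (comp_Int1 _ _ _ _ _ Ca Hin1) as Ca1.
        apply (Rel_intro a' x' s'); [apply (SC_Int [(l,s')] l); [auto|left; reflexivity]|auto|].
        eapply comp_next; eauto. eapply pt_sync; [apply st_ext; eauto|constructor|]. simpl; auto.
Qed.

Lemma sound s1 s2 : nuS s1 s2 -> forall r, complies nuS r s1 -> complies nuS r s2.
Proof.
  intros H12 r Hr. destruct (nuS_post _ _ H12) as (S1&S2&HS).
  destruct (SC_ex_unf s1 S1) as (u1&Hu1).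
  exists Rel. split; [apply Rel_post|]. split; auto. exists u1.
  split; [eapply SC_unfolds; eauto|]. split; [eapply unfolds_notMu; eauto|].
  split; [eapply comp_unf_fwd; eauto|]. apply HS; auto.
Qed.


Section Compl.
Variable B : term -> term -> Prop.

Lemma tau_Int_only u u' : notMu u -> step u ATau u' ->
  exists bs l s, u = Int bs /\ 1 < length bs /\ In (l,s) bs /\ u' = Int [(l,s)].
Proof. intros N H. inversion H; subst; eauto 10. exfalso; eapply N; eauto. Qed.

Lemma noInL_vs_Int1 r l s : complies B r (Int [(l,s)]) -> (forall r', ~ step r ATau r') ->
  (forall l' r', ~ step r (AInL l') r') -> r <> One -> False.
Proof.
  intros C Nt Nl N1. destruct (comp_prog_r _ _ _ C N1) as (r'&u'&Hp). inversion Hp; subst.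
  - eapply Nt; eauto.
  - apply step_Int in H. destruct H as [(_&Hl&_)|(?&?&?)]; [simpl in Hl; lia|discriminate].
  - apply step_Int in H0. destruct H0 as [(->&_)|(l2&E&->)]; [dinv H1|]. dinv H1. subst. eapply Nl; eauto.
Qed.

Lemma inv_pref r u (P : term -> Prop) : complies B r u -> notMu u -> r <> One ->
  (forall r', ~ step r ATau r') -> (forall l' r', ~ step r (AInL l') r') ->
  (forall a1 a2 r' u', step r a1 r' -> step u a2 u' -> dual B a1 a2 -> complies B r' u' -> P u) -> P u.
Proof.
  intros C Nu N1 Nt Nl K. destruct (comp_prog_r _ _ _ C N1) as (r'&u'&Hp). inversion Hp; subst.
  - exfalso; eapply Nt; eauto.
  - destruct (tau_Int_only _ _ Nu H) as (bs&l&s&->&_&_&->). exfalso.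
    eapply noInL_vs_Int1; eauto. eapply comp_next; eauto.
  - eapply K; eauto. eapply comp_next; eauto.
Qed.

Lemma inv_One u : complies B One u -> notMu u -> u = One.
Proof.
  intros C Nu. destruct (notMu_or u) as [_|(x&s&->)]; [|exfalso; eapply Nu; eauto].
  destruct (classic (u = One)) as [E|Hne]; auto. exfalso.
  destruct (comp_prog_s _ _ _ C Hne) as (r'&u'&Hp). inversion Hp; subst.
  - apply step_One in H. discriminate.
  - destruct (tau_Int_only _ _ Nu H) as (bs&l&s&->&_&_&->).
    assert (C' : complies B One (Int [(l,s)])) by (eapply comp_next; eauto).
    destruct (comp_stuck _ _ _ C') as [_ (?&Ht)].
    + intros r1 s1 Hp1. inversion Hp1; subst.
      * apply step_One in H0. discriminate.
      * apply step_Int in H0. destruct H0 as [(_&Hl&_)|(?&?&?)]; [simpl in Hl; lia|discriminate].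
      * apply step_One in H0. subst. dinv H2.
    + apply step_tick in Ht; auto. discriminate.
  - apply step_One in H. subst. dinv H1.
Qed.

Ltac noact := let H := fresh in intros ? H;
  first [apply step_OutT in H | apply step_InT in H | apply step_OutS in H | apply step_InS in H];
  destruct H; discriminate.

Lemma inv_OutT t rho u : complies B (OutT t rho) u -> notMu u ->
  exists t2 u', u = InT t2 u' /\ leb t t2 /\ complies B rho u'.
Proof.
  intros C Nu. pattern u; apply (inv_pref _ _ _ C Nu); [discriminate|noact|intros l'; noact|].
  intros a1 a2 r' u' H1 H2 Hd C'. apply step_OutT in H1. destruct H1 as [-> ->].
  dinv Hd. apply act_InT in H2. subst. eauto.
Qed.
Lemma inv_InT t rho u : complies B (InT t rho) u -> notMu u ->
  exists t2 u', u = OutT t2 u' /\ leb t2 t /\ complies B rho u'.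
Proof.
  intros C Nu. pattern u; apply (inv_pref _ _ _ C Nu); [discriminate|noact|intros l'; noact|].
  intros a1 a2 r' u' H1 H2 Hd C'. apply step_InT in H1. destruct H1 as [-> ->].
  dinv Hd. apply act_OutT in H2. subst. eauto.
Qed.
Lemma inv_InS m rho u : complies B (InS m rho) u -> notMu u ->
  exists m2 u', u = OutS m2 u' /\ B m2 m /\ complies B rho u'.
Proof.
  intros C Nu. pattern u; apply (inv_pref _ _ _ C Nu); [discriminate|noact|intros l'; noact|].
  intros a1 a2 r' u' H1 H2 Hd C'. apply step_InS in H1. destruct H1 as [-> ->].
  dinv Hd. apply act_OutS in H2. subst. eauto.
Qed.
Lemma inv_OutS m rho u : complies B (OutS m rho) u -> notMu u ->
  exists m2 u', u = InS m2 u' /\ B m m2 /\ complies B rho u'.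
Proof.
  intros C Nu. pattern u; apply (inv_pref _ _ _ C Nu); [discriminate|noact|intros l'; noact|].
  intros a1 a2 r' u' H1 H2 Hd C'. apply step_OutS in H1. destruct H1 as [-> ->].
  dinv Hd. apply act_InS in H2. subst. eauto.
Qed.

Lemma inv_Int1 l rho u : complies B (Int [(l,rho)]) u -> notMu u ->
  exists bs2, u = Ext bs2 /\ (exists y, In (l,y) bs2) /\ forall y, In (l,y) bs2 -> complies B rho y.
Proof.
  intros C Nu. pattern u; apply (inv_pref _ _ _ C Nu); [discriminate| | |].
  - intros r' H. apply step_Int in H. destruct H as [(_&Hl&_)|(?&?&?)]; [simpl in Hl; lia|discriminate].
  - intros l' r' H. apply step_Int in H. destruct H as [(?&_)|(?&?&?)]; discriminate.
  - intros a1 a2 r' u' H1 H2 Hd C'. apply step_Int in H1.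
    destruct H1 as [(->&_)|(l1&E&->)]; [dinv Hd|]. inversion E; subst.
    dinv Hd. subst. apply act_InL in H2. destruct H2 as (cs&->&Hin).
    exists cs. split; auto. split; eauto. intros y Hy. apply (comp_next B (Int [(l,r')]) (Ext cs)); [exact C|].
    eapply pt_sync; [constructor|apply st_ext; eauto|simpl; auto].
Qed.

Lemma inv_Ext cs u : complies B (Ext cs) u -> notMu u ->
  exists bs2, u = Int bs2 /\ forall l y, In (l,y) bs2 -> exists rho, In (l,rho) cs /\ complies B rho y.
Proof.
  intros C Nu. destruct (comp_prog_r _ _ _ C) as (r'&u'&Hp); [discriminate|].
  inversion Hp; subst.
  - apply step_Ext in H. destruct H as (?&?&_); discriminate.
  - destruct (tau_Int_only _ _ Nu H) as (bs&l&s&->&Hlen&_&->). exists bs. split; auto.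
    intros l1 y Hin.
    assert (C1 : complies B (Ext cs) (Int [(l1,y)])).
    { eapply comp_next; eauto. apply pt_right. apply st_int; auto. }
    destruct (comp_prog_r _ _ _ C1) as (r1&u1&Hp1); [discriminate|].
    inversion Hp1; subst.
    + apply step_Ext in H0. destruct H0 as (?&?&_); discriminate.
    + apply step_Int in H0. destruct H0 as [(_&Hl&_)|(?&?&?)]; [simpl in Hl; lia|discriminate].
    + apply step_Ext in H0. destruct H0 as (l2&->&Hin2). apply step_Int in H1.
      destruct H1 as [(->&_)|(l3&E&->)]; [dinv H2|]. inversion E; subst. dinv H2. subst.
      exists r1. split; auto. eapply comp_next; eauto.
  - apply step_Ext in H. destruct H as (l2&->&Hin2). dinv H1. subst.
    apply act_OutL in H0. subst. exists [(l, u')]. split; auto.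
    intros l1 y [E|[]]. inversion E; subst. exists r'. split; auto. eapply comp_next; eauto.
Qed.

Lemma comp_One : complies B One One.
Proof.
  exists (fun a b => a = One /\ b = One). split; auto.
  intros a b [-> ->]. split.
  - intros _. split; exists One; constructor.
  - intros r' s' Hp. exfalso. inversion Hp; subst.
    + apply step_One in H. discriminate.
    + apply step_One in H. discriminate.
    + apply step_One in H. apply step_One in H0. subst. simpl in H1. auto.
Qed.

Ltac onlysteps := first [
  let H := fresh in intros ? ? H; inversion H; subst; clear H;
  repeat match goal with
         | H : step (OutT _ _) _ _ |- _ => apply step_OutT in H; destruct H; subst
         | H : step (InT _ _) _ _ |- _ => apply step_InT in H; destruct H; subst
         | H : step (OutS _ _) _ _ |- _ => apply step_OutS in H; destruct H; subst
         | H : step (InS _ _) _ _ |- _ => apply step_InS in H; destruct H; subst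
         end; try discriminate ].

Lemma comp_pref_OutT t t' rho x : leb t t' -> complies B rho x -> complies B (OutT t rho) (InT t' x).
Proof.
  intros Hl C. apply comp_back.
  - do 2 eexists. eapply pt_sync; [constructor|constructor|simpl; eauto].
  - intros r' s' Hp. inversion Hp; subst.
    + apply step_OutT in H. destruct H; discriminate.
    + apply step_InT in H. destruct H; discriminate.
    + apply step_OutT in H. apply step_InT in H0. destruct H, H0; subst; auto.
Qed.
Lemma comp_pref_InT t t' rho x : leb t' t -> complies B rho x -> complies B (InT t rho) (OutT t' x).
Proof.
  intros Hl C. apply comp_back.
  - do 2 eexists. eapply pt_sync; [constructor|constructor|simpl; eauto].
  - intros r' s' Hp. inversion Hp; subst.
    + apply step_InT in H. destruct H; discriminate.
    + apply step_OutT in H. destruct H; discriminate.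
    + apply step_InT in H. apply step_OutT in H0. destruct H, H0; subst; auto.
Qed.
Lemma comp_pref_InS m m' rho x : B m m' -> complies B rho x -> complies B (InS m' rho) (OutS m x).
Proof.
  intros Hl C. apply comp_back.
  - do 2 eexists. eapply pt_sync; [constructor|constructor|simpl; eauto].
  - intros r' s' Hp. inversion Hp; subst.
    + apply step_InS in H. destruct H; discriminate.
    + apply step_OutS in H. destruct H; discriminate.
    + apply step_InS in H. apply step_OutS in H0. destruct H, H0; subst; auto.
Qed.
Lemma comp_pref_OutS m m' rho x : B m' m -> complies B rho x -> complies B (OutS m' rho) (InS m x).
Proof.
  intros Hl C. apply comp_back.
  - do 2 eexists. eapply pt_sync; [constructor|constructor|simpl; eauto].
  - intros r' s' Hp. inversion Hp; subst.
    + apply step_OutS in H. destruct H; discriminate.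
    + apply step_InS in H. destruct H; discriminate.
    + apply step_OutS in H. apply step_InS in H0. destruct H, H0; subst; auto.
Qed.

Lemma comp_pref_Ext l rho bs x : NoDup (map fst bs) -> In (l,x) bs -> complies B rho x ->
  complies B (Int [(l,rho)]) (Ext bs).
Proof.
  intros Nd Hin C. apply comp_back.
  - do 2 eexists. eapply pt_sync; [constructor|apply st_ext; eauto|simpl; eauto].
  - intros r' s' Hp. inversion Hp; subst.
    + apply step_Int in H. destruct H as [(_&Hl&_)|(?&?&?)]; [simpl in Hl; lia|discriminate].
    + apply step_Ext in H. destruct H as (?&?&_); discriminate.
    + apply step_Int in H. destruct H as [(->&_)|(l1&E&->)]; [dinv H1|]. inversion E; subst.
      apply step_Ext in H0. destruct H0 as (l2&->&Hin2). dinv H1. subst.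
      rewrite (nodup_fun _ _ _ _ Nd Hin2 Hin). auto.
Qed.

Lemma comp_Ext_Int1 cs l x : (exists rho, In (l,rho) cs) -> (forall rho, In (l,rho) cs -> complies B rho x) ->
  complies B (Ext cs) (Int [(l,x)]).
Proof.
  intros (rho&Hin) Hall. apply comp_back.
  - do 2 eexists. eapply pt_sync; [apply st_ext; eauto|constructor|simpl; eauto].
  - intros r' s' Hp. inversion Hp; subst.
    + apply step_Ext in H. destruct H as (?&?&_); discriminate.
    + apply step_Int in H. destruct H as [(_&Hl&_)|(?&?&?)]; [simpl in Hl; lia|discriminate].
    + apply step_Ext in H. destruct H as (l1&->&Hin1).
      apply step_Int in H0. destruct H0 as [(->&_)|(l2&E&->)]; [dinv H1|]. inversion E; subst.
      dinv H1. subst. auto.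
Qed.

Lemma comp_Ext_Int cs bs : bs <> [] ->
  (forall l x, In (l,x) bs -> (exists rho, In (l,rho) cs) /\ forall rho, In (l,rho) cs -> complies B rho x) ->
  complies B (Ext cs) (Int bs).
Proof.
  intros Hne Hc. destruct bs as [|[l x] [|q bs']]; [congruence| |].
  - apply comp_Ext_Int1; apply (Hc l x); left; auto.
  - apply comp_back.
    + do 2 eexists. apply pt_right. apply st_int with (l:=l) (s:=x); simpl; auto. lia.
    + intros r' s' Hp. inversion Hp; subst.
      * apply step_Ext in H. destruct H as (?&?&_); discriminate.
      * apply step_Int in H. destruct H as [(_&_&l1&x1&Hin&->)|(?&E&_)]; [|discriminate].
        apply comp_Ext_Int1; apply (Hc l1 x1 Hin).
      * apply step_Int in H0. destruct H0 as [(->&_)|(?&E&_)]; [dinv H1|discriminate].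
Qed.
End Compl.


Lemma SC_OutT_i t r : SC r -> SC (OutT t r).
Proof. intros (C&G&W). split; [|split]; auto. Qed.
Lemma SC_InT_i t r : SC r -> SC (InT t r).
Proof. intros (C&G&W). split; [|split]; auto. Qed.
Lemma SC_OutS_i m r : SC m -> SC r -> SC (OutS m r).
Proof. intros (C1&G1&W1) (C&G&W). split; [|split; simpl; auto]. intros x [H|H]; [eapply C1|eapply C]; eauto. Qed.
Lemma SC_InS_i m r : SC m -> SC r -> SC (InS m r).
Proof. intros (C1&G1&W1) (C&G&W). split; [|split; simpl; auto]. intros x [H|H]; [eapply C1|eapply C]; eauto. Qed.
Lemma SC_Ext_i cs : cs <> [] -> NoDup (map fst cs) -> (forall l t, In (l,t) cs -> SC t) -> SC (Ext cs).
Proof.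
  intros Hn Hd H. split; [|split].
  - intros x Hx. apply free_Ext in Hx. destruct Hx as (l&t&Hin&Hf). destruct (H l t Hin) as (C&_). eapply C; eauto.
  - apply guarded_Ext. intros l t Hin. apply H with l; auto.
  - apply wf_Ext. repeat split; auto. intros l t Hin. apply H with l; auto.
Qed.
Lemma SC_Int_i cs : cs <> [] -> NoDup (map fst cs) -> (forall l t, In (l,t) cs -> SC t) -> SC (Int cs).
Proof.
  intros Hn Hd H. split; [|split].
  - intros x Hx. apply free_Int in Hx. destruct Hx as (l&t&Hin&Hf). destruct (H l t Hin) as (C&_). eapply C; eauto.
  - apply guarded_Int. intros l t Hin. apply H with l; auto.
  - apply wf_Int. repeat split; auto. intros l t Hin. apply H with l; auto.
Qed.
Lemma SC_Int_single l r : SC r -> SC (Int [(l,r)]).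
Proof.
  intros H. apply SC_Int_i; [congruence| |].
  - simpl. constructor; [simpl; tauto|constructor].
  - intros l0 t [E|[]]. inversion E; subst; auto.
Qed.

Section Compl2.
Variable B : term -> term -> Prop.
Variable client : term -> term.
Hypothesis Hcl : forall z, SC z -> SC (client z) /\ complies B (client z) z.

Lemma ext_client bs1 l0 x0 rho0 : SC (Int bs1) -> In (l0,x0) bs1 -> SC rho0 -> complies B rho0 x0 ->
  exists cs, SC (Ext cs) /\ complies B (Ext cs) (Int bs1) /\ map fst cs = map fst bs1 /\ In (l0, rho0) cs.
Proof.
  intros Hs Hin Sr Cr. destruct (SC_Int_wf _ Hs) as [Hne Hnd].
  destruct (in_split _ _ Hin) as (pre&post&Eq).
  pose (cs := mapb client pre ++ (l0,rho0) :: mapb client post).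
  assert (Hf : map fst cs = map fst bs1).
  { unfold cs. rewrite Eq, !map_app. simpl. rewrite !fst_mapb. auto. }
  assert (Hmem : forall l r, In (l,r) cs -> (l = l0 /\ r = rho0) \/ exists x, In (l,x) bs1 /\ r = client x).
  { intros l r Hr. unfold cs in Hr. apply in_app_or in Hr. destruct Hr as [Hr|[E|Hr]].
    - apply in_mapb in Hr. destruct Hr as (x&Hx&->). right. exists x. split; auto.
      rewrite Eq. apply in_or_app; auto.
    - inversion E; subst; auto.
    - apply in_mapb in Hr. destruct Hr as (x&Hx&->). right. exists x. split; auto.
      rewrite Eq. apply in_or_app; right; right; auto. }
  exists cs. split; [|split; [|split; auto]].
  - apply SC_Ext_i.
    + unfold cs. destruct (mapb client pre); simpl; congruence.
    + rewrite Hf; auto.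
    + intros l t Ht. destruct (Hmem l t Ht) as [[_ ->]|(x&Hx&->)]; auto.
      apply Hcl. eapply SC_Int; eauto.
  - apply comp_Ext_Int; auto. intros l x Hx. split.
    + rewrite Eq in Hx. apply in_app_or in Hx. destruct Hx as [Hx|[E|Hx]].
      * exists (client x). unfold cs. apply in_or_app. left. apply in_mapb; eauto.
      * inversion E; subst. exists rho0. unfold cs. apply in_or_app. right. left; auto.
      * exists (client x). unfold cs. apply in_or_app. right. right. apply in_mapb; eauto.
    + intros r Hr. destruct (Hmem l r Hr) as [[-> ->]|(x'&Hx'&->)].
      * rewrite (nodup_fun _ _ _ _ Hnd Hx Hin). auto.
      * rewrite (nodup_fun _ _ _ _ Hnd Hx Hx'). apply Hcl. eapply SC_Int; eauto.
  - unfold cs. apply in_or_app. right. left. auto.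
Qed.
End Compl2.

Local Notation preorder_on_SC := (@preorder_on_SC BT L).

Definition Xc (x y : term) : Prop :=
  exists B, preorder_on_SC B /\ (forall a b, B a b -> subB B a b) /\ subB B x y.

Lemma Xc_post x y : Xc x y -> SC x /\ SC y /\ Sfun Xc Xc x y.
Proof.
  intros (B&HB&Hpost&Hxy). pose proof Hxy as (Sx&Sy&Hcl0).
  split; [auto|split; [auto|]]. intros u1 Hu1.
  assert (Su1 : SC u1) by (eapply SC_unfolds; eauto).
  assert (Nu1 : notMu u1) by (eapply unfolds_notMu; eauto).
  destruct (SC_ex_unf y Sy) as (u2&Hu2).
  assert (Su2 : SC u2) by (eapply SC_unfolds; eauto).
  assert (Nu2 : notMu u2) by (eapply unfolds_notMu; eauto).
  assert (Hcl : forall r, SC r -> complies B r u1 -> complies B r u2).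
  { intros r Sr Cr. eapply comp_unf_fwd; eauto. apply Hcl0; auto. eapply comp_unf_back; eauto. }
  assert (Hrefl : forall m, SC m -> B m m) by (apply HB).
  assert (Hcli : forall z, SC z -> SC (dE (fun x => Var x) z) /\ complies B (dE (fun x => Var x) z) z).
  { intros z Hz. apply client_ok; auto. apply leb_refl. }
  assert (HX : forall a b, B a b -> Xc a b) by (intros a b Hab; exists B; auto).
  assert (HXs : forall a b, subB B a b -> Xc a b) by (intros a b Hab; exists B; auto).
  destruct u1 as [|t1 x'|t1 x'|m1 x'|m1 x'|bs1|bs1|x0 s0|x0]; simpl.
  - pose proof (Hcl One Su1 (comp_One B)) as C.
    apply inv_One in C; auto. subst; auto.
  - assert (Sx' : SC x') by (eapply SC_InT; eauto).
    destruct (Hcli x' Sx') as (Sr&Cr).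
    assert (K : forall rho, SC rho -> complies B rho x' ->
              exists t2 y', u2 = InT t2 y' /\ leb t1 t2 /\ complies B rho y').
    { intros rho Srho Crho. apply inv_OutT; auto. apply Hcl.
      - apply SC_OutT_i; auto.
      - apply comp_pref_OutT; auto. apply leb_refl. }
    destruct (K _ Sr Cr) as (t2&y'&->&Hl&_). exists t2, y'. split; [auto|split; [|auto]].
    apply HXs. split; [auto|split; [eapply SC_InT; eauto|]].
    intros rho Srho Crho. destruct (K rho Srho Crho) as (t3&y''&E&_&C). inversion E; subst; auto.
  - assert (Sx' : SC x') by (eapply SC_OutT; eauto).
    destruct (Hcli x' Sx') as (Sr&Cr).
    assert (K : forall rho, SC rho -> complies B rho x' ->
              exists t2 y', u2 = OutT t2 y' /\ leb t2 t1 /\ complies B rho y').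
    { intros rho Srho Crho. apply inv_InT; auto. apply Hcl.
      - apply SC_InT_i; auto.
      - apply comp_pref_InT; auto. apply leb_refl. }
    destruct (K _ Sr Cr) as (t2&y'&->&Hl&_). exists t2, y'. split; [auto|split; [|auto]].
    apply HXs. split; [auto|split; [eapply SC_OutT; eauto|]].
    intros rho Srho Crho. destruct (K rho Srho Crho) as (t3&y''&E&_&C). inversion E; subst; auto.
  - destruct (SC_OutS _ _ Su1) as (Sm&Sx').
    destruct (Hcli x' Sx') as (Sr&Cr).
    assert (K : forall rho, SC rho -> complies B rho x' ->
              exists m2 y', u2 = OutS m2 y' /\ B m2 m1 /\ complies B rho y').
    { intros rho Srho Crho. apply inv_InS; auto. apply Hcl.
      - apply SC_InS_i; auto.
      - apply comp_pref_InS; auto. }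
    destruct (K _ Sr Cr) as (m2&y'&->&Hm&_). exists m2, y'. split; [auto|split; [|auto]].
    apply HXs. split; [auto|split; [apply (SC_OutS m2); auto|]].
    intros rho Srho Crho. destruct (K rho Srho Crho) as (t3&y''&E&_&C). inversion E; subst; auto.
  - destruct (SC_InS _ _ Su1) as (Sm&Sx').
    destruct (Hcli x' Sx') as (Sr&Cr).
    assert (K : forall rho, SC rho -> complies B rho x' ->
              exists m2 y', u2 = InS m2 y' /\ B m1 m2 /\ complies B rho y').
    { intros rho Srho Crho. apply inv_OutS; auto. apply Hcl.
      - apply SC_OutS_i; auto.
      - apply comp_pref_OutS; auto. }
    destruct (K _ Sr Cr) as (m2&y'&->&Hm&_). exists m2, y'. split; [auto|split; [|auto]].
    apply HXs. split; [auto|split; [apply (SC_InS m2); auto|]].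
    intros rho Srho Crho. destruct (K rho Srho Crho) as (t3&y''&E&_&C). inversion E; subst; auto.
  - destruct (SC_Ext_wf _ Su1) as [Hne Hnd].
    assert (K : forall l x, In (l,x) bs1 -> forall rho, SC rho -> complies B rho x ->
              exists bs2, u2 = Ext bs2 /\ (exists y, In (l,y) bs2) /\ forall y, In (l,y) bs2 -> complies B rho y).
    { intros l xx Hin rho Srho Crho. apply inv_Int1; auto. apply Hcl.
      - apply SC_Int_single; auto.
      - eapply comp_pref_Ext; eauto. }
    destruct bs1 as [|[l0 x0] bs1']; [congruence|].
    assert (Sx0 : SC x0) by (eapply SC_Ext; [eauto|left; reflexivity]).
    destruct (Hcli x0 Sx0) as (Sr0&Cr0).
    destruct (K l0 x0 (or_introl eq_refl) _ Sr0 Cr0) as (bs2&->&_&_).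
    exists bs2. split; auto. intros l x' Hin.
    assert (Sx' : SC x') by (apply (SC_Ext ((l0,x0)::bs1') l); auto).
    destruct (Hcli x' Sx') as (Sr&Cr).
    destruct (K l x' Hin _ Sr Cr) as (bs3&E&(y'&Hy')&_). inversion E; subst bs3.
    exists y'. split; auto. apply HXs. split; [auto|split; [apply (SC_Ext bs2 l); auto|]].
    intros rho Srho Crho. destruct (K l x' Hin rho Srho Crho) as (bs3&E'&_&C). inversion E'; subst. auto.
  - destruct (SC_Int_wf _ Su1) as [Hne Hnd].
    assert (K : forall l x, In (l,x) bs1 -> forall rho, SC rho -> complies B rho x ->
              exists cs bs2, map fst cs = map fst bs1 /\ In (l,rho) cs /\ u2 = Int bs2 /\
                forall l' y, In (l',y) bs2 -> exists rho', In (l',rho') cs /\ complies B rho' y).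
    { intros l xx Hin rho Srho Crho.
      destruct (ext_client B _ Hcli bs1 l xx rho Su1 Hin Srho Crho) as (cs&Scs&Ccs&Hf&Hin').
      destruct (inv_Ext B cs u2) as (bs2&E&Hb); auto. exists cs, bs2. auto. }
    destruct bs1 as [|[l0 x0] bs1']; [congruence|].
    assert (Sx0 : SC x0) by (eapply SC_Int; [eauto|left; reflexivity]).
    destruct (Hcli x0 Sx0) as (Sr0&Cr0).
    destruct (K l0 x0 (or_introl eq_refl) _ Sr0 Cr0) as (cs0&bs2&Hf0&_&->&Hb0).
    exists bs2. split; auto. intros l y' Hin.
    destruct (Hb0 l y' Hin) as (r0&Hr0&_).
    assert (Hl : In l (map fst ((l0,x0)::bs1'))).
    { rewrite <- Hf0. apply in_map_iff. exists (l,r0); auto. }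
    apply in_map_iff in Hl. destruct Hl as ([l1 x']&E1&Hin1). simpl in E1. subst l1.
    exists x'. split; auto. apply HXs. split; [apply (SC_Int ((l0,x0)::bs1') l); auto|split; [apply (SC_Int bs2 l); auto|]].
    intros rho Srho Crho. destruct (K l x' Hin1 rho Srho Crho) as (cs&bs3&Hf&Hinr&E&Hb).
    inversion E; subst bs3. destruct (Hb l y' Hin) as (rho'&Hr'&C).
    assert (Hndc : NoDup (map fst cs)) by (rewrite Hf; auto).
    rewrite (nodup_fun _ _ _ _ Hndc Hinr Hr'). auto.
  - exfalso; eapply Nu1; eauto.
  - exfalso; eapply SC_Var; eauto.
Qed.

End Proof.

Theorem mainTheorem12 (BT L : Type) (leb : BT -> BT -> Prop)
  (Hleb : PreOrder leb) (s1 s2 : term BT L) :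
  peer_sub leb s1 s2 <-> nuS leb s1 s2.
Proof.
  split.
  - intros (B&HB&Hpost&H12). apply (nuS_coind BT L leb (Xc BT L leb)).
    + intros x y Hxy. apply Xc_post; auto.
    + exists B. split; auto.
  - intros H12. exists (nuS leb). split; [split; [|split]|split].
    + intros x y Hxy. destruct (nuS_post BT L leb _ _ Hxy) as (?&?&_). auto.
    + intros x Hx. apply nuS_refl; auto.
    + intros x y z. apply nuS_trans; auto.
    + intros x y Hxy. destruct (nuS_post BT L leb _ _ Hxy) as (Sx&Sy&_).
      split; [auto|split; [auto|]]. intros r _ Hr. eapply sound; eauto.
    + auto.
Qed.
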